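(* Let $a>0$. For every $\psi\in\mathcal D[0,\infty)$, set $\bar\phi\doteq\Lambda_a(\Gamma_0(\psi))$ and $\bar\eta\doteq\bar\phi-\psi$. Then $(\bar\phi,\bar\eta)$ solves the Skorokhod problem on $[0,a]$ for $\psi$. Consequently $\Gamma_{0,a}=\Lambda_a\circ\Gamma_0$ on $\mathcal D[0,\infty)$.
   Context: $\mathcal D[0,\infty)$ is the space of right-continuous functions $[0,\infty)\to\mathbb R$ with left limits; $\mathcal I[0,\infty)$ and $\mathcal{BV}[0,\infty)$ are its subsets of nondecreasing functions and of functions of bounded variation on every compact interval. Notation: $x^+=\max(x,0)$, $x\wedge y=\min(x,y)$. The map $\Gamma_0:\mathcal D[0,\infty)\to\mathcal D[0,\infty)$ is $\Gamma_0(\psi)(t)=\psi(t)+\sup_{s\in[0,t]}[-\psi(s)]^+$. For $a>0$, $\Lambda_a:\mathcal D[0,\infty)\to\mathcal D[0,\infty)$ is $\Lambda_a(\phi)(t)=\phi(t)-\sup_{s\in[0,t]}\big[(\phi(s)-a)^+\wedge\inf_{u\in[s,t]}\phi(u)\big]$. Skorokhod problem on $[0,a]$ for $\psi\in\mathcal D[0,\infty)$: a pair $(\bar\phi,\bar\eta)\in\mathcal D[0,\infty)\times\mathcal{BV}[0,\infty)$ such that (1) $\bar\phi(t)=\psi(t)+\bar\eta(t)\in[0,a]$ for all $t\ge0$; (2) $\bar\eta=\bar\eta_\ell-\bar\eta_u$ with $\bar\eta_\ell,\bar\eta_u\in\mathcal I[0,\infty)$, $\bar\eta_\ell(0),\bar\eta_u(0)\ge0$,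 using the convention $\bar\eta(0-)=\bar\eta_\ell(0-)=\bar\eta_u(0-)=0$ (so the associated Lebesgue–Stieltjes measures on $[0,\infty)$ may have an atom at $0$), and $\int_{[0,\infty)}\mathbb I_{\{\bar\phi(s)>0\}}\,d\bar\eta_\ell(s)=0$, $\int_{[0,\infty)}\mathbb I_{\{\bar\phi(s)<a\}}\,d\bar\eta_u(s)=0$. Such a solution exists and is unique; $\Gamma_{0,a}(\psi)$ denotes its first component $\bar\phi$. *)

(* Defs.v *)
From Stdlib Require Import Reals Lra ClassicalEpsilon.
Open Scope R_scope.

(** Functions on [0,oo) are represented as [R -> R]; only values at t >= 0 matter. *)

Definition posp (x : R) : R := Rmax x 0.

(** Supremum of a set of reals (meaningful when E is nonempty and bounded above;
    an arbitrary value otherwise). *)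
Definition Rsup (E : R -> Prop) : R :=
  epsilon (inhabits 0) (fun m => is_lub E m).

Definition Rinf (E : R -> Prop) : R := - Rsup (fun y => E (- y)).

Definition sup_on (f : R -> R) (a b : R) : R :=
  Rsup (fun y => exists s, a <= s <= b /\ y = f s).
Definition inf_on (f : R -> R) (a b : R) : R :=
  Rinf (fun y => exists s, a <= s <= b /\ y = f s).

Definition Gamma0 (psi : R -> R) (t : R) : R :=
  psi t + sup_on (fun s => posp (- psi s)) 0 t.

Definition Lambda (a : R) (phi : R -> R) (t : R) : R :=
  phi t - sup_on (fun s => Rmin (posp (phi s - a)) (inf_on phi s t)) 0 t.

Definition right_cont (f : R -> R) (t : R) : Prop :=
  forall eps, 0 < eps -> exists d, 0 < d /\
    forall s, t <= s < t + d -> Rabs (f s - f t) < eps.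
Definition has_left_lim (f : R -> R) (t : R) : Prop :=
  exists L, forall eps, 0 < eps -> exists d, 0 < d /\
    forall s, t - d < s < t -> Rabs (f s - L) < eps.
Definition is_D (f : R -> R) : Prop :=
  forall t, 0 <= t -> right_cont f t /\ (0 < t -> has_left_lim f t).

Definition is_I (f : R -> R) : Prop :=
  is_D f /\ forall s t, 0 <= s <= t -> f s <= f t.

Fixpoint var_sum (f : R -> R) (x : nat -> R) (n : nat) : R :=
  match n with
  | O => 0
  | S k => var_sum f x k + Rabs (f (x (S k)) - f (x k))
  end.

Definition is_BV (f : R -> R) : Prop :=
  is_D f /\
  forall T, 0 <= T -> exists M, forall (n : nat) (x : nat -> R),
    0 <= x O -> (forall i, (i < n)%nat -> x i <= x (S i)) -> x n <= T ->
    var_sum f x n <= M.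

Fixpoint cover_sum (F : R -> R) (a b : nat -> R) (N : nat) : R :=
  match N with
  | O => 0
  | S k => cover_sum F a b k + (F (b k) - F (a k))
  end.

(** For F in I[0,oo) with the convention F(0-) = 0, the Lebesgue-Stieltjes
    measure mu_F on [0,oo) has mu_F({0}) = F(0) and mu_F((s,t]) = F(t)-F(s)
    for 0 <= s <= t.  [LS_null F A] says mu_F(A) = 0, i.e.
    int_{[0,oo)} I_A dF = 0, spelled out through the outer measure:
    the atom at 0 does not charge A, and A /\ (0,oo) can be covered by
    countably many intervals (a_n,b_n] of arbitrarily small total mass. *)
Definition LS_null (F : R -> R) (A : R -> Prop) : Prop :=
  (A 0 -> F 0 = 0) /\
  forall eps, 0 < eps -> exists a b : nat -> R,
    (forall n, 0 <= a n <= b n) /\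
    (forall s, 0 < s -> A s -> exists n, a n < s <= b n) /\
    (forall N, cover_sum F a b N <= eps).

Definition Skorokhod_sol (a : R) (psi phi eta : R -> R) : Prop :=
  is_D phi /\ is_BV eta /\
  (forall t, 0 <= t -> phi t = psi t + eta t /\ 0 <= phi t <= a) /\
  exists eta_l eta_u : R -> R,
    is_I eta_l /\ is_I eta_u /\ 0 <= eta_l 0 /\ 0 <= eta_u 0 /\
    (forall t, 0 <= t -> eta t = eta_l t - eta_u t) /\
    LS_null eta_l (fun s => 0 <= s /\ phi s > 0) /\
    LS_null eta_u (fun s => 0 <= s /\ phi s < a).

(* Main.v *)
Require Import Defs.
From Stdlib Require Import Reals Lra Lia ClassicalEpsilon Classical Cantor.
Open Scope R_scope.

Lemma Rsup_lub (E : R -> Prop) :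
  (exists x, E x) -> (exists M, forall x, E x -> x <= M) -> is_lub E (Rsup E).
Proof.
  intros [x Hx] [M HM].
  unfold Rsup.
  apply epsilon_spec.
  destruct (completeness E) as [m Hm].
  - exists M. intros y Hy. now apply HM.
  - now exists x.
  - now exists m.
Qed.

Section SupOn.
Variables (f : R -> R) (a b : R).

Lemma sup_on_lub M : a <= b -> (forall s, a <= s <= b -> f s <= M) ->
  is_lub (fun y => exists s, a <= s <= b /\ y = f s) (sup_on f a b).
Proof.
  intros Hab HM. unfold sup_on. apply Rsup_lub.
  - exists (f a). exists a. split; [lra|reflexivity].
  - exists M. intros y [s [Hs ->]]. now apply HM.
Qed.

Lemma sup_on_ge M s : (forall s, a <= s <= b -> f s <= M) -> a <= s <= b -> f s <= sup_on f a b.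
Proof.
  intros HM Hs. destruct (sup_on_lub M) as [H1 _]; [lra|exact HM|].
  apply H1. now exists s.
Qed.

Lemma sup_on_le M : a <= b -> (forall s, a <= s <= b -> f s <= M) -> sup_on f a b <= M.
Proof.
  intros Hab HM. destruct (sup_on_lub M) as [_ H2]; [lra|exact HM|].
  apply H2. intros y [s [Hs ->]]. now apply HM.
Qed.

Lemma sup_on_approx M eps : a <= b -> (forall s, a <= s <= b -> f s <= M) -> 0 < eps ->
  exists s, a <= s <= b /\ sup_on f a b - eps < f s.
Proof.
  intros Hab HM He.
  destruct (classic (exists s, a <= s <= b /\ sup_on f a b - eps < f s)) as [H|H]; [exact H|].
  exfalso.
  assert (sup_on f a b <= sup_on f a b - eps); [|lra].
  apply sup_on_le; [exact Hab|].
  intros s Hs. apply Rnot_lt_le. intro Hc. apply H. exists s. split; assumption.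
Qed.

Lemma inf_on_glb m : a <= b -> (forall s, a <= s <= b -> m <= f s) ->
  is_lub (fun y => exists s, a <= s <= b /\ - y = f s) (- inf_on f a b).
Proof.
  intros Hab HM. unfold inf_on, Rinf. rewrite Ropp_involutive. apply Rsup_lub.
  - exists (- f a). exists a. split; [lra|ring].
  - exists (- m). intros y [s [Hs Hy]]. specialize (HM s Hs). lra.
Qed.

Lemma inf_on_le m s : (forall s, a <= s <= b -> m <= f s) -> a <= s <= b -> inf_on f a b <= f s.
Proof.
  intros HM Hs. destruct (inf_on_glb m) as [H1 _]; [lra|exact HM|].
  assert (- f s <= - inf_on f a b); [|lra].
  apply H1. exists s. split; [exact Hs|ring].
Qed.

Lemma inf_on_ge m : a <= b -> (forall s, a <= s <= b -> m <= f s) -> m <= inf_on f a b.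
Proof.
  intros Hab HM. destruct (inf_on_glb m) as [_ H2]; [lra|exact HM|].
  assert (- inf_on f a b <= - m); [|lra].
  apply H2. intros y [s [Hs Hy]]. specialize (HM s Hs). lra.
Qed.

End SupOn.

Lemma inf_on_approx f a b m eps : a <= b -> (forall s, a <= s <= b -> m <= f s) -> 0 < eps ->
  exists s, a <= s <= b /\ f s < inf_on f a b + eps.
Proof.
  intros Hab HM He.
  destruct (classic (exists s, a <= s <= b /\ f s < inf_on f a b + eps)) as [H|H]; [exact H|].
  exfalso.
  assert (inf_on f a b + eps <= inf_on f a b); [|lra].
  apply inf_on_ge; [exact Hab|].
  intros s Hs. apply Rnot_lt_le. intro Hc. apply H. exists s. split; assumption.
Qed.

Lemma posp_ge0 x : 0 <= posp x.
Proof. unfold posp. apply Rmax_r. Qed.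
Lemma posp_ge x : x <= posp x.
Proof. unfold posp. apply Rmax_l. Qed.
Lemma posp_pos x : 0 <= x -> posp x = x.
Proof. intros. unfold posp. apply Rmax_left. lra. Qed.
Lemma posp_neg x : x <= 0 -> posp x = 0.
Proof. intros. unfold posp. apply Rmax_right. lra. Qed.
Lemma posp_le x y : x <= y -> posp x <= posp y.
Proof. intros. unfold posp, Rmax. destruct (Rle_dec x 0), (Rle_dec y 0); lra. Qed.
Lemma posp_lub x M : x <= M -> 0 <= M -> posp x <= M.
Proof. intros. unfold posp. apply Rmax_lub; lra. Qed.
Lemma posp_lip x y : posp x <= posp y + Rabs (x - y).
Proof.
  unfold posp, Rmax. destruct (Rle_dec x 0), (Rle_dec y 0);
  unfold Rabs; destruct (Rcase_abs (x - y)); lra.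
Qed.

Lemma real_ind (A B : R) (P : R -> Prop) :
  A <= B -> P A ->
  (forall x, A <= x < B -> (forall y, A <= y <= x -> P y) ->
       exists d, 0 < d /\ forall y, x < y < x + d -> P y) ->
  (forall x, A < x <= B -> (forall y, A <= y < x -> P y) -> P x) ->
  forall x, A <= x <= B -> P x.
Proof.
  intros HAB HA Hstep Hcont.
  set (S := fun x => A <= x <= B /\ forall y, A <= y <= x -> P y).
  assert (HS : is_lub S (Rsup S)).
  { apply Rsup_lub. exists A. split; [lra|]. intros y Hy. replace y with A by lra. exact HA.
    exists B. intros x [Hx _]. lra. }
  set (s := Rsup S) in *.
  assert (HAs : A <= s). { destruct HS as [H1 _]. apply H1. split; [lra|]. intros y Hy. replace y with A by lra. exact HA. }
  assert (HsB : s <= B). { destruct HS as [_ H2]. apply H2. intros x [Hx _]. lra. }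
  assert (Hbelow : forall y, A <= y < s -> P y).
  { intros y Hy. destruct (classic (P y)) as [Hp|Hp]; [exact Hp|exfalso].
    destruct HS as [_ H2]. assert (s <= y); [|lra].
    apply H2. intros x [Hx Hx2]. apply Rnot_lt_le. intro Hyx. apply Hp. apply Hx2. lra. }
  assert (Hs : P s).
  { destruct (Req_dec s A) as [E|E]. rewrite E. exact HA.
    apply Hcont. lra. exact Hbelow. }
  assert (Hall : forall y, A <= y <= s -> P y).
  { intros y Hy. destruct (Req_dec y s) as [->|E]; [exact Hs|]. apply Hbelow. lra. }
  assert (HsS : s = B).
  { destruct (Req_dec s B) as [E|E]; [exact E|exfalso].
    destruct (Hstep s) as [d [Hd Hd2]]; [lra|exact Hall|].
    set (z := Rmin (s + d/2) B).
    assert (z <= s).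
    { destruct HS as [H1 _]. apply H1. split. unfold z. split. apply Rmin_glb; lra. apply Rmin_r.
      intros y Hy. destruct (Rle_dec y s). apply Hall. lra. apply Hd2. split. lra.
      assert (z <= s + d/2) by apply Rmin_l. lra. }
    unfold z in H. unfold Rmin in H. destruct (Rle_dec (s + d/2) B); lra. }
  intros x Hx. apply Hall. lra.
Qed.

Lemma Rabs_le_b x B : Rabs x <= B -> - B <= x <= B.
Proof. unfold Rabs. destruct (Rcase_abs x); intros; lra. Qed.

Definition is_left_lim (f : R -> R) (t l : R) : Prop :=
  forall eps, 0 < eps -> exists d, 0 < d /\ forall s, t - d < s < t -> Rabs (f s - l) < eps.

Definition left_cauchy (f : R -> R) (t : R) : Prop :=
  forall eps, 0 < eps -> exists d, 0 < d /\
    forall x y, t - d < x < t -> t - d < y < t -> Rabs (f x - f y) < eps.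

Lemma INR_small d : 0 < d -> exists N, forall n, (n >= N)%nat -> 0 < / (INR n + 1) < d.
Proof.
  intros Hd. destruct (archimed_cor1 d Hd) as [N [HN HN0]].
  exists N. intros n Hn.
  assert (0 < INR N) by (apply lt_0_INR; lia).
  assert (INR N <= INR n) by (apply le_INR; lia).
  split. apply Rinv_0_lt_compat. lra.
  apply Rle_lt_trans with (/ INR N); [|exact HN].
  apply Rinv_le_contravar; lra.
Qed.

Lemma cauchy_left_lim f t : left_cauchy f t -> exists l, is_left_lim f t l.
Proof.
  intros HC.
  set (u := fun n : nat => f (t - / (INR n + 1))).
  assert (Hu : Cauchy_crit u).
  { intros eps He. destruct (HC eps He) as [d [Hd Hd2]].
    destruct (INR_small d Hd) as [N HN]. exists N. intros n m Hn Hm.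
    unfold Rdist, u. specialize (HN n Hn) as H1. specialize (HN m Hm) as H2.
    apply Hd2; lra. }
  destruct (R_complete u Hu) as [l Hl].
  exists l. intros eps He.
  destruct (HC (eps/2)) as [d [Hd Hd2]]; [lra|].
  exists d. split; [exact Hd|]. intros s Hs.
  destruct (Hl (eps/2)) as [N1 HN1]; [lra|].
  destruct (INR_small d Hd) as [N2 HN2].
  specialize (HN1 (max N1 N2) ltac:(lia)). specialize (HN2 (max N1 N2) ltac:(lia)).
  unfold Rdist, u in HN1.
  specialize (Hd2 s (t - / (INR (max N1 N2) + 1)) Hs ltac:(lra)).
  replace (f s - l) with ((f s - f (t - / (INR (Init.Nat.max N1 N2) + 1))) +
     (f (t - / (INR (Init.Nat.max N1 N2) + 1)) - l)) by ring.
  eapply Rle_lt_trans. apply Rabs_triang. lra.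
Qed.

Lemma left_lim_cauchy f t l : is_left_lim f t l -> left_cauchy f t.
Proof.
  intros H eps He. destruct (H (eps/2)) as [d [Hd Hd2]]; [lra|].
  exists d. split; [exact Hd|]. intros x y Hx Hy.
  pose proof (Hd2 x Hx) as Hd4. pose proof (Hd2 y Hy) as Hd3. clear Hd2.
  replace (f x - f y) with ((f x - l) - (f y - l)) by ring.
  eapply Rle_lt_trans. apply Rabs_triang. rewrite Rabs_Ropp. lra.
Qed.

Lemma has_left_lim_iff f t : has_left_lim f t <-> exists l, is_left_lim f t l.
Proof. split; intros [l Hl]; exists l; exact Hl. Qed.

Lemma left_lim_unique f t l1 l2 : is_left_lim f t l1 -> is_left_lim f t l2 -> l1 = l2.
Proof.
  intros H1 H2. apply Rle_antisym; apply Rnot_lt_le; intro Hc.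
  - destruct (H1 ((l1 - l2)/2)) as [d1 [Hd1 Hd1']]; [lra|].
    destruct (H2 ((l1 - l2)/2)) as [d2 [Hd2 Hd2']]; [lra|].
    set (s := t - Rmin d1 d2 / 2).
    assert (0 < Rmin d1 d2) by (apply Rmin_glb_lt; lra).
    assert (Rmin d1 d2 <= d1) by apply Rmin_l. assert (Rmin d1 d2 <= d2) by apply Rmin_r.
    specialize (Hd1' s ltac:(unfold s; lra)). specialize (Hd2' s ltac:(unfold s; lra)).
    apply Rabs_def2 in Hd1'. apply Rabs_def2 in Hd2'. lra.
  - destruct (H1 ((l2 - l1)/2)) as [d1 [Hd1 Hd1']]; [lra|].
    destruct (H2 ((l2 - l1)/2)) as [d2 [Hd2 Hd2']]; [lra|].
    set (s := t - Rmin d1 d2 / 2).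
    assert (0 < Rmin d1 d2) by (apply Rmin_glb_lt; lra).
    assert (Rmin d1 d2 <= d1) by apply Rmin_l. assert (Rmin d1 d2 <= d2) by apply Rmin_r.
    specialize (Hd1' s ltac:(unfold s; lra)). specialize (Hd2' s ltac:(unfold s; lra)).
    apply Rabs_def2 in Hd1'. apply Rabs_def2 in Hd2'. lra.
Qed.

Lemma left_lim_le f t l c d : is_left_lim f t l -> 0 < d ->
  (forall s, t - d < s < t -> f s <= c) -> l <= c.
Proof.
  intros Hl Hd Hc. apply Rnot_lt_le. intro H.
  destruct (Hl (l - c)) as [d1 [Hd1 Hd1']]; [lra|].
  assert (0 < Rmin d d1) by (apply Rmin_glb_lt; lra).
  assert (Rmin d d1 <= d) by apply Rmin_l. assert (Rmin d d1 <= d1) by apply Rmin_r.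
  set (s := t - Rmin d d1 / 2).
  specialize (Hd1' s ltac:(unfold s; lra)). specialize (Hc s ltac:(unfold s; lra)).
  apply Rabs_def2 in Hd1'. lra.
Qed.

Lemma left_lim_ge f t l c d : is_left_lim f t l -> 0 < d ->
  (forall s, t - d < s < t -> c <= f s) -> c <= l.
Proof.
  intros Hl Hd Hc. apply Rnot_lt_le. intro H.
  destruct (Hl (c - l)) as [d1 [Hd1 Hd1']]; [lra|].
  assert (0 < Rmin d d1) by (apply Rmin_glb_lt; lra).
  assert (Rmin d d1 <= d) by apply Rmin_l. assert (Rmin d d1 <= d1) by apply Rmin_r.
  set (s := t - Rmin d d1 / 2).
  specialize (Hd1' s ltac:(unfold s; lra)). specialize (Hc s ltac:(unfold s; lra)).
  apply Rabs_def2 in Hd1'. lra.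
Qed.

Lemma left_lim_minus f g t lf lg : is_left_lim f t lf -> is_left_lim g t lg ->
  is_left_lim (fun s => f s - g s) t (lf - lg).
Proof.
  intros Hf Hg eps He.
  destruct (Hf (eps/2)) as [d1 [Hd1 H1]]; [lra|].
  destruct (Hg (eps/2)) as [d2 [Hd2 H2]]; [lra|].
  exists (Rmin d1 d2). split. apply Rmin_glb_lt; lra.
  intros s Hs. assert (Rmin d1 d2 <= d1) by apply Rmin_l. assert (Rmin d1 d2 <= d2) by apply Rmin_r.
  specialize (H1 s ltac:(lra)). specialize (H2 s ltac:(lra)).
  replace (f s - g s - (lf - lg)) with ((f s - lf) - (g s - lg)) by ring.
  eapply Rle_lt_trans. apply Rabs_triang. rewrite Rabs_Ropp. lra.
Qed.

Lemma left_lim_plus f g t lf lg : is_left_lim f t lf -> is_left_lim g t lg ->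
  is_left_lim (fun s => f s + g s) t (lf + lg).
Proof.
  intros Hf Hg eps He.
  destruct (Hf (eps/2)) as [d1 [Hd1 H1]]; [lra|].
  destruct (Hg (eps/2)) as [d2 [Hd2 H2]]; [lra|].
  exists (Rmin d1 d2). split. apply Rmin_glb_lt; lra.
  intros s Hs. assert (Rmin d1 d2 <= d1) by apply Rmin_l. assert (Rmin d1 d2 <= d2) by apply Rmin_r.
  specialize (H1 s ltac:(lra)). specialize (H2 s ltac:(lra)).
  replace (f s + g s - (lf + lg)) with ((f s - lf) + (g s - lg)) by ring.
  eapply Rle_lt_trans. apply Rabs_triang. lra.
Qed.

Lemma right_cont_minus f g t : right_cont f t -> right_cont g t -> right_cont (fun s => f s - g s) t.
Proof.
  intros Hf Hg eps He.
  destruct (Hf (eps/2)) as [d1 [Hd1 H1]]; [lra|].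
  destruct (Hg (eps/2)) as [d2 [Hd2 H2]]; [lra|].
  exists (Rmin d1 d2). split. apply Rmin_glb_lt; lra.
  intros s Hs. assert (Rmin d1 d2 <= d1) by apply Rmin_l. assert (Rmin d1 d2 <= d2) by apply Rmin_r.
  specialize (H1 s ltac:(lra)). specialize (H2 s ltac:(lra)).
  replace (f s - g s - (f t - g t)) with ((f s - f t) - (g s - g t)) by ring.
  eapply Rle_lt_trans. apply Rabs_triang. rewrite Rabs_Ropp. lra.
Qed.

Lemma right_cont_plus f g t : right_cont f t -> right_cont g t -> right_cont (fun s => f s + g s) t.
Proof.
  intros Hf Hg eps He.
  destruct (Hf (eps/2)) as [d1 [Hd1 H1]]; [lra|].
  destruct (Hg (eps/2)) as [d2 [Hd2 H2]]; [lra|].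
  exists (Rmin d1 d2). split. apply Rmin_glb_lt; lra.
  intros s Hs. assert (Rmin d1 d2 <= d1) by apply Rmin_l. assert (Rmin d1 d2 <= d2) by apply Rmin_r.
  specialize (H1 s ltac:(lra)). specialize (H2 s ltac:(lra)).
  replace (f s + g s - (f t + g t)) with ((f s - f t) + (g s - g t)) by ring.
  eapply Rle_lt_trans. apply Rabs_triang. lra.
Qed.

Lemma is_D_minus f g : is_D f -> is_D g -> is_D (fun s => f s - g s).
Proof.
  intros Hf Hg t Ht. destruct (Hf t Ht) as [Hf1 Hf2]. destruct (Hg t Ht) as [Hg1 Hg2].
  split. now apply right_cont_minus.
  intros Htp. destruct (Hf2 Htp) as [lf Hlf]. destruct (Hg2 Htp) as [lg Hlg].
  exists (lf - lg). now apply left_lim_minus.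
Qed.

Lemma is_D_plus f g : is_D f -> is_D g -> is_D (fun s => f s + g s).
Proof.
  intros Hf Hg t Ht. destruct (Hf t Ht) as [Hf1 Hf2]. destruct (Hg t Ht) as [Hg1 Hg2].
  split. now apply right_cont_plus.
  intros Htp. destruct (Hf2 Htp) as [lf Hlf]. destruct (Hg2 Htp) as [lg Hlg].
  exists (lf + lg). now apply left_lim_plus.
Qed.

Lemma is_D_ext f g : (forall t, 0 <= t -> f t = g t) -> is_D f -> is_D g.
Proof.
  intros E Hf t Ht. destruct (Hf t Ht) as [H1 H2]. split.
  - intros eps He. destruct (H1 eps He) as [d [Hd Hd2]]. exists d. split; [exact Hd|].
    intros s Hs. rewrite <- !E by lra. apply Hd2; lra.
  - intros Htp. destruct (H2 Htp) as [l Hl]. exists l. intros eps He.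
    destruct (Hl eps He) as [d [Hd Hd2]]. exists (Rmin d t). split. apply Rmin_glb_lt; lra.
    intros s Hs. assert (Rmin d t <= d) by apply Rmin_l. assert (Rmin d t <= t) by apply Rmin_r.
    rewrite <- E by lra. apply Hd2; lra.
Qed.

Lemma D_bounded f T : is_D f -> 0 <= T -> exists B, forall s, 0 <= s <= T -> Rabs (f s) <= B.
Proof.
  intros Hf HT.
  set (P := fun x => exists B, forall s, 0 <= s <= x -> Rabs (f s) <= B).
  assert (HP : forall x, 0 <= x <= T -> P x).
  { apply real_ind.
    - exact HT.
    - exists (Rabs (f 0)). intros s Hs. replace s with 0 by lra. lra.
    - intros x Hx Hall. destruct (Hall x ltac:(lra)) as [B HB].
      destruct (Hf x ltac:(lra)) as [Hr _]. destruct (Hr 1 Rlt_0_1) as [d [Hd Hd2]].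
      exists d. split; [exact Hd|]. intros y Hy. exists (Rmax B (Rabs (f x) + 1)).
      intros s Hs. destruct (Rle_dec s x).
      + eapply Rle_trans. apply HB. lra. apply Rmax_l.
      + eapply Rle_trans; [|apply Rmax_r]. specialize (Hd2 s ltac:(lra)).
        pose proof (Rabs_triang_inv (f s) (f x)). lra.
    - intros x Hx Hall. destruct (Hf x ltac:(lra)) as [_ Hl]. destruct (Hl ltac:(lra)) as [l Hll].
      destruct (Hll 1 Rlt_0_1) as [d [Hd Hd2]].
      set (y := Rmax 0 (x - d/2)).
      assert (0 <= y) by apply Rmax_l. assert (x - d/2 <= y) by apply Rmax_r.
      assert (y < x). { unfold y, Rmax. destruct (Rle_dec 0 (x - d/2)); lra. }
      destruct (Hall y ltac:(lra)) as [B HB].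
      exists (Rmax (Rmax B (Rabs l + 1)) (Rabs (f x))).
      intros s Hs. destruct (Rle_dec s y).
      + eapply Rle_trans. apply HB. lra. eapply Rle_trans; [apply Rmax_l|apply Rmax_l].
      + destruct (Req_dec s x) as [->|E]. apply Rmax_r.
        eapply Rle_trans; [|apply Rmax_l]. eapply Rle_trans; [|apply Rmax_r].
        specialize (Hd2 s ltac:(lra)). pose proof (Rabs_triang_inv (f s) l). lra. }
  destruct (HP T ltac:(lra)) as [B HB]. exists B. exact HB.
Qed.

Lemma sup_trap (G : R -> R) u v c K0 B :
  u <= v -> 0 < c -> 0 <= K0 -> (forall x, u <= x <= v -> G x <= B) ->
  (forall M, (forall x, u <= x <= v -> G x <= M) -> forall x, u <= x <= v -> G x <= Rmax K0 (posp (M - c))) ->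
  forall x, u <= x <= v -> G x <= K0.
Proof.
  intros Huv Hc HK0 HB H.
  set (M := sup_on G u v).
  assert (HM : forall x, u <= x <= v -> G x <= M) by (intros; eapply sup_on_ge; eauto).
  assert (HM2 : M <= Rmax K0 (posp (M - c))).
  { apply sup_on_le. exact Huv. apply H. exact HM. }
  assert (M <= K0).
  { unfold Rmax, posp in HM2. destruct (Rle_dec K0 (Rmax (M - c) 0)); [|lra].
    unfold Rmax in *. destruct (Rle_dec (M - c) 0); lra. }
  intros x Hx. specialize (HM x Hx). lra.
Qed.



Lemma inf_trap (G : R -> R) u v c K0 B :
  u <= v -> 0 < c -> (forall x, u <= x <= v -> B <= G x) ->
  (forall m, (forall x, u <= x <= v -> m <= G x) -> forall x, u <= x <= v -> Rmin K0 (m + c) <= G x) ->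
  forall x, u <= x <= v -> K0 <= G x.
Proof.
  intros Huv Hc HB H.
  set (m := inf_on G u v).
  assert (Hm : forall x, u <= x <= v -> m <= G x) by (intros; eapply inf_on_le; eauto).
  assert (Hm2 : Rmin K0 (m + c) <= m).
  { apply inf_on_ge. exact Huv. apply H. exact Hm. }
  assert (K0 <= m).
  { unfold Rmin in Hm2. destruct (Rle_dec K0 (m + c)); lra. }
  intros x Hx. specialize (Hm x Hx). lra.
Qed.

Section Gam.
Variable psi : R -> R.
Hypothesis Hpsi : is_D psi.

Definition Lf t := sup_on (fun s => posp (- psi s)) 0 t.

Lemma Lf_bnd T : 0 <= T -> exists M, forall s, 0 <= s <= T -> posp (- psi s) <= M.
Proof.
  intros HT. destruct (D_bounded psi T Hpsi HT) as [B HB]. exists B.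
  intros s Hs. specialize (HB s Hs). apply posp_lub.
  - pose proof (Rabs_Ropp (psi s)). pose proof (RRle_abs (- psi s)). lra.
  - pose proof (Rabs_pos (psi s)). lra.
Qed.

Lemma Lf_ge s t : 0 <= s <= t -> posp (- psi s) <= Lf t.
Proof.
  intros Hs. destruct (Lf_bnd t) as [M HM]; [lra|]. exact (sup_on_ge (fun s => posp (- psi s)) 0 t M s HM Hs).
Qed.

Lemma Lf_le t M : 0 <= t -> (forall s, 0 <= s <= t -> posp (- psi s) <= M) -> Lf t <= M.
Proof. intros. apply (sup_on_le (fun s => posp (- psi s))); auto. Qed.

Lemma Lf_nonneg t : 0 <= t -> 0 <= Lf t.
Proof. intros. eapply Rle_trans. apply (posp_ge0 (- psi t)). apply Lf_ge. lra. Qed.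

Lemma Lf_mono s t : 0 <= s <= t -> Lf s <= Lf t.
Proof. intros. apply Lf_le. lra. intros x Hx. apply Lf_ge. lra. Qed.

Lemma Gamma0_eq t : Gamma0 psi t = psi t + Lf t.
Proof. reflexivity. Qed.

Lemma Gamma0_nonneg t : 0 <= t -> 0 <= Gamma0 psi t.
Proof.
  intros. rewrite Gamma0_eq. pose proof (Lf_ge t t ltac:(lra)). pose proof (posp_ge (- psi t)). lra.
Qed.

Lemma Lf_rc t : 0 <= t -> right_cont Lf t.
Proof.
  intros Ht eps He. destruct (Hpsi t Ht) as [Hr _].
  destruct (Hr (eps/2)) as [d [Hd Hd2]]; [lra|].
  exists d. split; [exact Hd|]. intros s Hs.
  assert (Lf t <= Lf s) by (apply Lf_mono; lra).
  assert (Lf s <= Lf t + eps/2).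
  { apply Lf_le. lra. intros x Hx. destruct (Rle_dec x t).
    - pose proof (Lf_ge x t ltac:(lra)). lra.
    - specialize (Hd2 x ltac:(lra)). pose proof (posp_lip (- psi x) (- psi t)) as P1.
      pose proof (Lf_ge t t ltac:(lra)) as P2.
      replace (- psi x - - psi t) with (- (psi x - psi t)) in P1 by ring. rewrite Rabs_Ropp in P1. lra. }
  rewrite Rabs_right; lra.
Qed.

Lemma Lf_lc t : 0 < t -> left_cauchy Lf t.
Proof.
  intros Ht eps He. destruct (Hpsi t ltac:(lra)) as [_ Hl]. destruct (Hl Ht) as [l Hll].
  destruct (Hll (eps/4)) as [d [Hd Hd2]]; [lra|].
  exists (Rmin d t). split. apply Rmin_glb_lt; lra.
  assert (Rmin d t <= d) by apply Rmin_l. assert (Rmin d t <= t) by apply Rmin_r.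
  assert (key : forall x y, t - Rmin d t < y <= x -> x < t -> Lf y <= Lf x <= Lf y + eps/2).
  { intros x y Hy Hx. split. apply Lf_mono; lra.
    apply Lf_le. lra. intros s Hs. destruct (Rle_dec s y).
    - pose proof (Lf_ge s y ltac:(lra)). lra.
    - pose proof (Hd2 s ltac:(lra)) as Q1. pose proof (Hd2 y ltac:(lra)) as Q2.
      pose proof (posp_lip (- psi s) (- psi y)) as Q3. pose proof (Lf_ge y y ltac:(lra)) as Q4.
      replace (- psi s - - psi y) with ((- (psi s - l)) + (psi y - l)) in Q3 by ring.
      pose proof (Rabs_triang (- (psi s - l)) (psi y - l)) as Q5.
      rewrite Rabs_Ropp in Q5. lra. }
  intros x y Hx Hy. destruct (Rle_dec y x).
  - pose proof (key x y ltac:(lra) ltac:(lra)). rewrite Rabs_right; lra.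
  - pose proof (key y x ltac:(lra) ltac:(lra)). rewrite Rabs_left1; lra.
Qed.

Lemma Lf_D : is_D Lf.
Proof.
  intros t Ht. split. now apply Lf_rc. intros Htp. apply cauchy_left_lim. now apply Lf_lc.
Qed.

Lemma Gamma0_D : is_D (Gamma0 psi).
Proof. apply (is_D_plus psi Lf Hpsi Lf_D). Qed.

Lemma Lf_jump t lL : 0 < t -> is_left_lim Lf t lL ->
  lL <= Lf t /\ Lf t <= Rmax lL (posp (- psi t)) /\ 0 <= lL.
Proof.
  intros Ht Hl. split; [|split].
  - apply (left_lim_le Lf t lL (Lf t) t Hl Ht). intros s Hs. apply Lf_mono. lra.
  - apply Lf_le. lra. intros s Hs. destruct (Req_dec s t) as [->|E]. apply Rmax_r.
    eapply Rle_trans; [|apply Rmax_l].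
    apply (left_lim_ge Lf t lL _ (t - s) Hl ltac:(lra)). intros x Hx. apply Lf_ge. lra.
  - apply (left_lim_ge Lf t lL 0 t Hl Ht). intros s Hs. apply Lf_nonneg. lra.
Qed.

Lemma Lf_nojump t lL : 0 < t -> is_left_lim Lf t lL -> 0 < Gamma0 psi t -> Lf t = lL.
Proof.
  intros Ht Hl Hp. destruct (Lf_jump t lL Ht Hl) as [H1 [H2 H3]].
  rewrite Gamma0_eq in Hp. pose proof (Lf_ge t t ltac:(lra)).
  unfold Rmax in H2. destruct (Rle_dec lL (posp (- psi t))); [|lra].
  unfold posp, Rmax in *. destruct (Rle_dec (- psi t) 0); lra.
Qed.

Lemma Lf_flat u v c : 0 <= u <= v -> 0 < c -> (forall x, u <= x <= v -> c <= Gamma0 psi x) ->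
  Lf v = Lf u.
Proof.
  intros Huv Hc Hphi.
  assert (forall x, u <= x <= v -> Lf x <= Lf u).
  { apply (sup_trap Lf u v c (Lf u) (Lf v)). lra. exact Hc. apply Lf_nonneg; lra.
    intros x Hx. apply Lf_mono; lra.
    intros M HM x Hx. apply Lf_le. lra. intros s Hs. destruct (Rle_dec s u).
    - eapply Rle_trans; [|apply Rmax_l]. apply Lf_ge. lra.
    - eapply Rle_trans; [|apply Rmax_r]. apply posp_le.
      specialize (Hphi s ltac:(lra)). specialize (HM s ltac:(lra)). rewrite Gamma0_eq in Hphi. lra. }
  specialize (H v ltac:(lra)). pose proof (Lf_mono u v ltac:(lra)). lra.
Qed.

End Gam.

Section Kdef.
Variable a : R.
Hypothesis Ha : 0 < a.
Variable phi : R -> R.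
Hypothesis Hphi : is_D phi.
Hypothesis Hphi0 : forall t, 0 <= t -> 0 <= phi t.

Definition mm s t := inf_on phi s t.
Definition gg s := posp (phi s - a).
Definition term s t := Rmin (gg s) (mm s t).
Definition Kf t := sup_on (fun s => term s t) 0 t.

Lemma Lambda_eq t : Lambda a phi t = phi t - Kf t.
Proof. reflexivity. Qed.

Lemma mm_le s x t : 0 <= s <= x -> x <= t -> mm s t <= phi x.
Proof. intros. unfold mm. apply (inf_on_le phi s t 0). intros; apply Hphi0; lra. lra. Qed.

Lemma mm_ge s t c : 0 <= s <= t -> (forall x, s <= x <= t -> c <= phi x) -> c <= mm s t.
Proof. intros. unfold mm. apply inf_on_ge; auto. lra. Qed.

Lemma mm_nonneg s t : 0 <= s <= t -> 0 <= mm s t.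
Proof. intros. apply mm_ge. lra. intros. apply Hphi0. lra. Qed.

Lemma mm_mono s x t : 0 <= s <= x -> x <= t -> mm s t <= mm s x.
Proof. intros. apply mm_ge. lra. intros. apply mm_le; lra. Qed.

Lemma gg_nonneg s : 0 <= gg s.
Proof. apply posp_ge0. Qed.

Lemma gg_le_phi s : 0 <= s -> gg s <= phi s.
Proof. intros. unfold gg. apply posp_lub. lra. now apply Hphi0. Qed.

Lemma gg_lip s x : gg s <= gg x + Rabs (phi s - phi x).
Proof.
  unfold gg. pose proof (posp_lip (phi s - a) (phi x - a)).
  replace (phi s - a - (phi x - a)) with (phi s - phi x) in H by ring. exact H.
Qed.

Lemma term_le s t : 0 <= s <= t -> term s t <= phi t.
Proof. intros. unfold term. eapply Rle_trans. apply Rmin_r. apply mm_le; lra. Qed.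

Lemma term_nonneg s t : 0 <= s <= t -> 0 <= term s t.
Proof. intros. unfold term. apply Rmin_glb. apply gg_nonneg. now apply mm_nonneg. Qed.

Lemma Kf_ge s t : 0 <= s <= t -> term s t <= Kf t.
Proof.
  intros. unfold Kf. apply (sup_on_ge (fun s => term s t) 0 t (phi t)).
  intros; apply term_le; lra. exact H.
Qed.

Lemma Kf_le t M : 0 <= t -> (forall s, 0 <= s <= t -> term s t <= M) -> Kf t <= M.
Proof. intros. unfold Kf. apply (sup_on_le (fun s => term s t)); auto. Qed.

Lemma Kf_approx t eps : 0 <= t -> 0 < eps -> exists s, 0 <= s <= t /\ Kf t - eps < term s t.
Proof.
  intros. unfold Kf. apply (sup_on_approx (fun s => term s t) 0 t (phi t)); auto.
  intros; apply term_le; lra.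
Qed.

Lemma Kf_nonneg t : 0 <= t -> 0 <= Kf t.
Proof. intros. eapply Rle_trans. apply (term_nonneg t t). lra. apply Kf_ge. lra. Qed.

Lemma Kf_le_phi t : 0 <= t -> Kf t <= phi t.
Proof. intros. apply Kf_le. exact H. intros. apply term_le. lra. Qed.

Lemma Kf_ge_gg t : 0 <= t -> gg t <= Kf t.
Proof.
  intros. eapply Rle_trans; [|apply (Kf_ge t t); lra]. unfold term. apply Rmin_glb. lra.
  apply mm_ge. lra. intros x Hx. replace x with t by lra. now apply gg_le_phi.
Qed.

Lemma Kf_lower x t c : 0 <= x <= t -> (forall u, x <= u <= t -> c <= phi u) -> Rmin (Kf x) c <= Kf t.
Proof.
  intros Hx Hc. apply Rnot_lt_le. intro Hlt.
  set (eta := Rmin (Kf x) c - Kf t).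
  destruct (Kf_approx x eta) as [s [Hs Hs2]]. lra. unfold eta; lra.
  assert (Hm : Rmin (mm s x) c <= mm s t).
  { apply mm_ge. lra. intros u Hu. destruct (Rle_dec u x).
    - eapply Rle_trans. apply Rmin_l. apply mm_le; lra.
    - eapply Rle_trans. apply Rmin_r. apply Hc. lra. }
  pose proof (Kf_ge s t ltac:(lra)).
  assert (Rmin (term s x) c <= term s t).
  { unfold term in *. unfold Rmin in *.
    destruct (Rle_dec (gg s) (mm s x)), (Rle_dec (gg s) (mm s t)), (Rle_dec (mm s x) c),
      (Rle_dec (gg s) c); lra. }
  assert (Rmin (Kf x) c <= Kf x) by apply Rmin_l. assert (Rmin (Kf x) c <= c) by apply Rmin_r.
  unfold eta in Hs2. unfold Rmin at 1 in H0. destruct (Rle_dec (term s x) c); lra.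
Qed.

Lemma Kf_upper x t M : 0 <= x <= t -> Kf x <= M -> (forall s, x < s <= t -> gg s <= M) -> Kf t <= M.
Proof.
  intros Hx HK Hg. apply Kf_le. lra. intros s Hs. destruct (Rle_dec s x).
  - eapply Rle_trans; [|exact HK]. eapply Rle_trans; [|apply (Kf_ge s x); lra].
    unfold term. pose proof (mm_mono s x t ltac:(lra) ltac:(lra)).
    unfold Rmin. destruct (Rle_dec (gg s) (mm s t)), (Rle_dec (gg s) (mm s x)); lra.
  - eapply Rle_trans. apply Rmin_l. apply Hg. lra.
Qed.

Lemma Kf_rc t : 0 <= t -> right_cont Kf t.
Proof.
  intros Ht eps He. destruct (Hphi t Ht) as [Hr _].
  destruct (Hr (eps/2)) as [d [Hd Hd2]]; [lra|].
  exists d. split; [exact Hd|]. intros s Hs.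
  assert (Rmin (Kf t) (phi t - eps/2) <= Kf s).
  { apply Kf_lower. lra. intros u Hu. destruct (Req_dec u t) as [->|E]. lra.
    specialize (Hd2 u ltac:(lra)). apply Rabs_def2 in Hd2. lra. }
  assert (Kf s <= Kf t + eps/2).
  { apply (Kf_upper t). lra. lra. intros u Hu. specialize (Hd2 u ltac:(lra)).
    pose proof (gg_lip u t). pose proof (Kf_ge_gg t Ht). lra. }
  pose proof (Kf_le_phi t Ht).
  unfold Rmin in H. destruct (Rle_dec (Kf t) (phi t - eps/2)); apply Rabs_def1; lra.
Qed.

Lemma Kf_lc t : 0 < t -> left_cauchy Kf t.
Proof.
  intros Ht eps He. destruct (Hphi t ltac:(lra)) as [_ Hl]. destruct (Hl Ht) as [l Hll].
  destruct (Hll (eps/4)) as [d [Hd Hd2]]; [lra|].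
  exists (Rmin d t). split. apply Rmin_glb_lt; lra.
  assert (Rmin d t <= d) by apply Rmin_l. assert (Rmin d t <= t) by apply Rmin_r.
  assert (key : forall x y, t - Rmin d t < y <= x -> x < t -> Kf y - eps/2 <= Kf x <= Kf y + eps/2).
  { intros x y Hy Hx. split.
    - assert (Rmin (Kf y) (l - eps/4) <= Kf x).
      { apply Kf_lower. lra. intros u Hu. specialize (Hd2 u ltac:(lra)). apply Rabs_def2 in Hd2. lra. }
      pose proof (Kf_le_phi y ltac:(lra)). pose proof (Hd2 y ltac:(lra)). apply Rabs_def2 in H3.
      unfold Rmin in H1. destruct (Rle_dec (Kf y) (l - eps/4)); lra.
    - apply (Kf_upper y). lra. lra. intros u Hu.
      pose proof (gg_lip u y). pose proof (Kf_ge_gg y ltac:(lra)).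
      pose proof (Hd2 u ltac:(lra)). pose proof (Hd2 y ltac:(lra)).
      pose proof (Rabs_triang (phi u - l) (- (phi y - l))). rewrite Rabs_Ropp in H5.
      replace (phi u - l + - (phi y - l)) with (phi u - phi y) in H5 by ring. lra. }
  intros x y Hx Hy. destruct (Rle_dec y x).
  - pose proof (key x y ltac:(lra) ltac:(lra)). apply Rabs_def1; lra.
  - pose proof (key y x ltac:(lra) ltac:(lra)). apply Rabs_def1; lra.
Qed.

Lemma Kf_D : is_D Kf.
Proof.
  intros t Ht. split. now apply Kf_rc. intros Htp. apply cauchy_left_lim. now apply Kf_lc.
Qed.

Lemma Kf_jump_lo t lK lp : 0 < t -> is_left_lim Kf t lK -> is_left_lim phi t lp ->
  Rmin lK (phi t) <= Kf t.
Proof.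
  intros Ht HK Hp.
  assert (HlKp : lK <= lp).
  { pose proof (left_lim_minus phi Kf t lp lK Hp HK) as H.
    assert (0 <= lp - lK); [|lra].
    apply (left_lim_ge _ t _ 0 t H Ht). intros s Hs. pose proof (Kf_le_phi s ltac:(lra)). lra. }
  apply Rnot_lt_le. intro Hlt. set (eta := Rmin lK (phi t) - Kf t).
  assert (Hmk : Rmin lK (phi t) <= lK) by apply Rmin_l.
  assert (Hmp : Rmin lK (phi t) <= phi t) by apply Rmin_r.
  destruct (HK (eta/2)) as [d1 [Hd1 H1]]. unfold eta; lra.
  destruct (Hp (eta/2)) as [d2 [Hd2 H2]]. unfold eta; lra.
  set (x := t - Rmin (Rmin d1 d2) t / 2).
  assert (0 < Rmin (Rmin d1 d2) t) by (repeat apply Rmin_glb_lt; lra).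
  assert (Rmin (Rmin d1 d2) t <= Rmin d1 d2) by apply Rmin_l.
  assert (Rmin (Rmin d1 d2) t <= t) by apply Rmin_r.
  assert (Rmin d1 d2 <= d1) by apply Rmin_l. assert (Rmin d1 d2 <= d2) by apply Rmin_r.
  assert (HH : Rmin (Kf x) (Rmin (lp - eta/2) (phi t)) <= Kf t).
  { apply Kf_lower. unfold x; lra. intros u Hu. destruct (Req_dec u t) as [->|E]. apply Rmin_r.
    eapply Rle_trans. apply Rmin_l. specialize (H2 u ltac:(unfold x in *; lra)). apply Rabs_def2 in H2. lra. }
  specialize (H1 x ltac:(unfold x; lra)). apply Rabs_def2 in H1.
  assert (Kf t < Rmin (Kf x) (Rmin (lp - eta/2) (phi t))).
  { apply Rmin_glb_lt. unfold eta in *; lra. apply Rmin_glb_lt; unfold eta in *; lra. }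
  lra.
Qed.

Lemma Kf_jump_hi t lK : 0 < t -> is_left_lim Kf t lK -> Kf t <= Rmax lK (gg t).
Proof.
  intros Ht HK. apply Kf_le. lra. intros s Hs. destruct (Req_dec s t) as [->|E].
  - eapply Rle_trans; [apply Rmin_l|apply Rmax_r].
  - eapply Rle_trans; [|apply Rmax_l].
    apply (left_lim_ge Kf t lK _ (t - s) HK ltac:(lra)). intros x Hx.
    eapply Rle_trans; [|apply (Kf_ge s x); lra]. unfold term.
    pose proof (mm_mono s x t ltac:(lra) ltac:(lra)).
    unfold Rmin. destruct (Rle_dec (gg s) (mm s t)), (Rle_dec (gg s) (mm s x)); lra.
Qed.

Lemma Kf_jump_lo0 t lK : 0 < t -> is_left_lim Kf t lK -> 0 <= lK.
Proof.
  intros Ht HK. apply (left_lim_ge Kf t lK 0 t HK Ht). intros s Hs. apply Kf_nonneg. lra.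
Qed.

Lemma Kf_up u v c : 0 <= u <= v -> 0 < c -> (forall x, u <= x <= v -> c <= phi x - Kf x) ->
  forall x, u <= x <= v -> Kf u <= Kf x.
Proof.
  intros Huv Hc Hb.
  apply (inf_trap Kf u v c (Kf u) 0). lra. exact Hc.
  intros. apply Kf_nonneg. lra.
  intros m Hm x Hx. apply Kf_lower. lra. intros w Hw.
  specialize (Hm w ltac:(lra)). specialize (Hb w ltac:(lra)). lra.
Qed.

Lemma Kf_down u v c : 0 <= u <= v -> 0 < c -> (forall x, u <= x <= v -> phi x - Kf x <= a - c) ->
  forall x, u <= x <= v -> Kf x <= Kf u.
Proof.
  intros Huv Hc Hb.
  destruct (D_bounded phi v Hphi ltac:(lra)) as [B HB].
  apply (sup_trap Kf u v c (Kf u) B). lra. exact Hc. apply Kf_nonneg. lra.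
  intros x Hx. pose proof (Kf_le_phi x ltac:(lra)). specialize (HB x ltac:(lra)).
  pose proof (RRle_abs (phi x)). lra.
  intros M HM x Hx. apply (Kf_upper u). lra. apply Rmax_l.
  intros s Hs. eapply Rle_trans; [|apply Rmax_r]. unfold gg. apply posp_le.
  specialize (Hb s ltac:(lra)). specialize (HM s ltac:(lra)). lra.
Qed.

End Kdef.

Section Ebar.
Variable a : R.
Hypothesis Ha : 0 < a.
Variable psi : R -> R.
Hypothesis Hpsi : is_D psi.

Definition ph := Gamma0 psi.
Definition KK := Kf a ph.
Definition pb t := Lambda a ph t.
Definition ee t := pb t - psi t.

Lemma ph_D : is_D ph.
Proof. apply Gamma0_D. exact Hpsi. Qed.
Lemma ph_nonneg t : 0 <= t -> 0 <= ph t.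
Proof. apply Gamma0_nonneg. exact Hpsi. Qed.

Lemma pb_eq t : pb t = ph t - KK t.
Proof. reflexivity. Qed.

Lemma ee_eq t : ee t = Lf psi t - KK t.
Proof. unfold ee. rewrite pb_eq. unfold ph. rewrite Gamma0_eq. ring. Qed.

Lemma KK_D : is_D KK.
Proof. apply (Kf_D a Ha ph ph_D ph_nonneg). Qed.

Lemma pb_D : is_D pb.
Proof.
  apply (is_D_ext (fun t => ph t - KK t)). intros; reflexivity.
  apply is_D_minus. exact ph_D. exact KK_D.
Qed.

Lemma ee_D : is_D ee.
Proof. apply is_D_minus. exact pb_D. exact Hpsi. Qed.

Lemma pb_range t : 0 <= t -> 0 <= pb t <= a.
Proof.
  intros Ht. rewrite pb_eq. pose proof (Kf_le_phi a ph ph_nonneg t Ht).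
  pose proof (Kf_ge_gg a Ha ph ph_nonneg t Ht). unfold gg in H0.
  pose proof (posp_ge (ph t - a)). unfold KK. lra.
Qed.

Lemma KK_nonneg t : 0 <= t -> 0 <= KK t.
Proof. apply Kf_nonneg. exact ph_nonneg. Qed.

Lemma ee_down u v c : 0 <= u -> 0 < c -> (forall x, u <= x <= v -> c <= pb x) ->
  forall y z, u <= y <= z -> z <= v -> ee z <= ee y.
Proof.
  intros Hu Hc Hb y z Hy Hz. rewrite !ee_eq.
  assert (Lf psi z = Lf psi y).
  { apply (Lf_flat psi Hpsi y z c). lra. exact Hc. intros x Hx.
    specialize (Hb x ltac:(lra)). rewrite pb_eq in Hb. pose proof (KK_nonneg x ltac:(lra)).
    unfold ph in Hb. lra. }
  assert (KK y <= KK z).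
  { apply (Kf_up a ph ph_nonneg y z c). lra. exact Hc. intros x Hx.
    specialize (Hb x ltac:(lra)). rewrite pb_eq in Hb. exact Hb. lra. }
  lra.
Qed.

Lemma ee_up u v c : 0 <= u -> 0 < c -> (forall x, u <= x <= v -> pb x <= a - c) ->
  forall y z, u <= y <= z -> z <= v -> ee y <= ee z.
Proof.
  intros Hu Hc Hb y z Hy Hz. rewrite !ee_eq.
  pose proof (Lf_mono psi Hpsi y z ltac:(lra)).
  assert (KK z <= KK y).
  { apply (Kf_down a ph ph_D ph_nonneg y z c). lra. exact Hc. intros x Hx.
    specialize (Hb x ltac:(lra)). rewrite pb_eq in Hb. exact Hb. lra. }
  lra.
Qed.

Lemma ee_left_lim t : 0 < t -> exists lL lK,
  is_left_lim (Lf psi) t lL /\ is_left_lim KK t lK /\ is_left_lim ee t (lL - lK).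
Proof.
  intros Ht. destruct (Lf_D psi Hpsi t ltac:(lra)) as [_ H1]. destruct (H1 Ht) as [lL HL].
  destruct (KK_D t ltac:(lra)) as [_ H2]. destruct (H2 Ht) as [lK HK].
  exists lL, lK. split; [exact HL|]. split; [exact HK|].
  intros eps He. destruct (left_lim_minus _ _ t lL lK HL HK eps He) as [d [Hd Hd2]].
  exists d. split; [exact Hd|]. intros s Hs. rewrite ee_eq. apply Hd2. exact Hs.
Qed.

Lemma ee_jump_pos t le : 0 < t -> is_left_lim ee t le -> 0 < pb t -> ee t <= le.
Proof.
  intros Ht Hle Hp. destruct (ee_left_lim t Ht) as [lL [lK [HL [HK He]]]].
  rewrite (left_lim_unique ee t le (lL - lK) Hle He).
  rewrite pb_eq in Hp. pose proof (KK_nonneg t ltac:(lra)).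
  assert (Lf psi t = lL).
  { apply (Lf_nojump psi Hpsi t lL Ht HL). fold ph. lra. }
  destruct (ph_D t ltac:(lra)) as [_ Hp2]. destruct (Hp2 Ht) as [lp Hlp].
  pose proof (Kf_jump_lo a ph ph_nonneg t lK lp Ht HK Hlp). fold KK in H1.
  rewrite ee_eq. unfold Rmin in H1. destruct (Rle_dec lK (ph t)); lra.
Qed.

Lemma ee_jump_lt t le : 0 < t -> is_left_lim ee t le -> pb t < a -> le <= ee t.
Proof.
  intros Ht Hle Hp. destruct (ee_left_lim t Ht) as [lL [lK [HL [HK He]]]].
  rewrite (left_lim_unique ee t le (lL - lK) Hle He).
  destruct (Lf_jump psi Hpsi t lL Ht HL) as [H1 _].
  pose proof (Kf_jump_hi a ph ph_nonneg t lK Ht HK) as H2. fold KK in H2.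
  pose proof (Kf_jump_lo0 a ph ph_nonneg t lK Ht HK) as H3.
  pose proof (Kf_ge_gg a Ha ph ph_nonneg t ltac:(lra)) as H4. fold KK in H4.
  rewrite pb_eq in Hp. rewrite ee_eq.
  unfold Rmax in H2. destruct (Rle_dec lK (gg a ph t)); [|lra].
  unfold gg, posp, Rmax in *. destruct (Rle_dec (ph t - a) 0); lra.
Qed.

Lemma Lf_zero : Lf psi 0 = posp (- psi 0).
Proof.
  apply Rle_antisym. apply Lf_le. lra. intros s Hs. replace s with 0 by lra. lra.
  apply Lf_ge. exact Hpsi. lra.
Qed.

Lemma KK_zero : KK 0 = gg a ph 0.
Proof.
  apply Rle_antisym.
  - apply Kf_le. lra. intros s Hs. replace s with 0 by lra. apply Rmin_l.
  - apply Kf_ge_gg. exact Ha. exact ph_nonneg. lra.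
Qed.

Lemma ee_zero_pos : 0 < pb 0 -> ee 0 <= 0.
Proof.
  intros Hp. rewrite ee_eq, Lf_zero, KK_zero. rewrite pb_eq, KK_zero in Hp.
  unfold gg, ph in *. rewrite Gamma0_eq, Lf_zero in *.
  unfold posp, Rmax in *. repeat destruct (Rle_dec _ _); lra.
Qed.

Lemma ee_zero_lt : pb 0 < a -> 0 <= ee 0.
Proof.
  intros Hp. rewrite ee_eq, Lf_zero, KK_zero. rewrite pb_eq, KK_zero in Hp.
  unfold gg, posp, Rmax in *. destruct (Rle_dec (ph 0 - a) 0); [|lra].
  destruct (Rle_dec (- psi 0) 0); lra.
Qed.

Definition mono_dn (f : R -> R) (P : R -> Prop) := forall y z, P y -> P z -> y <= z -> f z <= f y.
Definition mono_up (f : R -> R) (P : R -> Prop) := forall y z, P y -> P z -> y <= z -> f y <= f z.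

Lemma ee_rnbhd t : 0 <= t -> exists d, 0 < d /\
  (mono_dn ee (fun x => t <= x < t + d) \/ mono_up ee (fun x => t <= x < t + d)).
Proof.
  intros Ht. destruct (pb_D t Ht) as [Hr _]. destruct (Hr (a/6)) as [d [Hd Hd2]]. lra.
  exists d. split; [exact Hd|]. destruct (Rle_dec (a/3) (pb t)).
  - left. intros y z Hy Hz Hyz. apply (ee_down y z (a/6)). lra. lra.
    intros x Hx. specialize (Hd2 x ltac:(lra)). apply Rabs_def2 in Hd2. lra. lra. lra.
  - right. intros y z Hy Hz Hyz. apply (ee_up y z (a/2)). lra. lra.
    intros x Hx. specialize (Hd2 x ltac:(lra)). apply Rabs_def2 in Hd2. lra. lra. lra.
Qed.

Lemma ee_lnbhd t : 0 < t -> exists d, 0 < d <= t /\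
  (mono_dn ee (fun x => t - d < x < t) \/ mono_up ee (fun x => t - d < x < t)).
Proof.
  intros Ht. destruct (pb_D t ltac:(lra)) as [_ Hl]. destruct (Hl Ht) as [l Hll].
  destruct (Hll (a/6)) as [d [Hd Hd2]]. lra.
  exists (Rmin d t). assert (Rmin d t <= d) by apply Rmin_l. assert (Rmin d t <= t) by apply Rmin_r.
  assert (0 < Rmin d t) by (apply Rmin_glb_lt; lra).
  split. lra. destruct (Rle_dec (a/3) l).
  - left. intros y z Hy Hz Hyz. apply (ee_down y z (a/6)). lra. lra.
    intros x Hx. specialize (Hd2 x ltac:(lra)). apply Rabs_def2 in Hd2. lra. lra. lra.
  - right. intros y z Hy Hz Hyz. apply (ee_up y z (a/2)). lra. lra.
    intros x Hx. specialize (Hd2 x ltac:(lra)). apply Rabs_def2 in Hd2. lra. lra. lra.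
Qed.

End Ebar.

Section PVdef.
Variable e : R -> R.

Fixpoint psum (x : nat -> R) (n : nat) : R :=
  match n with
  | O => 0
  | S k => psum x k + posp (e (x (S k)) - e (x k))
  end.

Definition part (x : nat -> R) (n : nat) (t : R) : Prop :=
  x O = 0 /\ (forall i, (i < n)%nat -> x i <= x (S i)) /\ x n <= t.

Definition Pset t y : Prop := exists n x, part x n t /\ y = posp (e 0) + psum x n.
Definition PV t := Rsup (Pset t).
Definition bnd t := exists M, forall y, Pset t y -> y <= M.

Lemma psum_nonneg x n : 0 <= psum x n.
Proof. induction n; simpl. lra. pose proof (posp_ge0 (e (x (S n)) - e (x n))). lra. Qed.

Lemma psum_ext x x' n : (forall i, (i <= n)%nat -> x i = x' i) -> psum x n = psum x' n.
Proof.
  induction n; intros H; simpl. reflexivity.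
  rewrite IHn by (intros; apply H; lia). rewrite (H n) by lia. rewrite (H (S n)) by lia. reflexivity.
Qed.

Lemma part_le x n t : part x n t -> forall i j, (i <= j <= n)%nat -> x i <= x j.
Proof.
  intros [H0 [H1 H2]] i j Hij. destruct Hij as [Hij Hjn].
  induction j. replace i with O by lia. lra.
  destruct (Nat.eq_dec i (S j)) as [->|E]. lra.
  specialize (IHj ltac:(lia) ltac:(lia)). specialize (H1 j ltac:(lia)). lra.
Qed.

Lemma part_range x n t : part x n t -> forall i, (i <= n)%nat -> 0 <= x i <= t.
Proof.
  intros Hp i Hi. pose proof (part_le x n t Hp O i ltac:(lia)).
  pose proof (part_le x n t Hp i n ltac:(lia)). destruct Hp as [Q0 [_ Q2]]. lra.
Qed.

Definition extend (x : nat -> R) (n : nat) (u : R) : nat -> R :=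
  fun i => if Nat.leb i n then x i else u.

Lemma extend_part x n s t : part x n s -> s <= t -> part (extend x n t) (S n) t.
Proof.
  intros Hp Hst. pose proof (part_range x n s Hp) as Hr. destruct Hp as [H0 [H1 H2]].
  unfold extend. split; [|split].
  - simpl. exact H0.
  - intros i Hi. destruct (Nat.leb_spec i n); destruct (Nat.leb_spec (S i) n).
    + apply H1. lia.
    + replace i with n by lia. lra.
    + lia.
    + lia.
  - destruct (Nat.leb_spec (S n) n). lia. lra.
Qed.

Lemma extend_psum x n u : psum (extend x n u) (S n) = psum x n + posp (e u - e (x n)).
Proof.
  simpl. rewrite (psum_ext (extend x n u) x n).
  unfold extend. rewrite Nat.leb_refl. destruct (Nat.leb_spec (S n) n). lia. reflexivity.
  intros i Hi. unfold extend. destruct (Nat.leb_spec i n). reflexivity. lia.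
Qed.

Lemma Pset_ext x n s t : part x n s -> s <= t ->
  Pset t (posp (e 0) + psum x n + posp (e t - e (x n))).
Proof.
  intros Hp Hst. exists (S n), (extend x n t). split. now apply (extend_part x n s t).
  rewrite extend_psum. ring.
Qed.

Lemma Pset_nonempty t : 0 <= t -> Pset t (posp (e 0)).
Proof. intros. exists O, (fun _ => 0). split. split; [reflexivity|split]. intros; lia. simpl; lra. simpl; ring. Qed.

Lemma Pset_mono s t y : s <= t -> Pset s y -> Pset t y.
Proof. intros Hst [n [x [[H0 [H1 H2]] Hy]]]. exists n, x. split; [split; [|split]|]; auto. lra. Qed.

Lemma PV_lub t : 0 <= t -> bnd t -> is_lub (Pset t) (PV t).
Proof. intros Ht [M HM]. apply Rsup_lub. exists (posp (e 0)). now apply Pset_nonempty. now exists M. Qed.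

Lemma PV_ge t y : 0 <= t -> bnd t -> Pset t y -> y <= PV t.
Proof. intros Ht Hb Hy. destruct (PV_lub t Ht Hb) as [H1 _]. now apply H1. Qed.

Lemma PV_le t M : 0 <= t -> (forall y, Pset t y -> y <= M) -> PV t <= M.
Proof. intros Ht HM. destruct (PV_lub t Ht) as [_ H2]. now exists M. now apply H2. Qed.

Lemma PV_bound u v h M : 0 <= u <= v ->
  (forall x x', u <= x <= x' -> x' <= v -> posp (e x' - e x) <= h x' - h x) ->
  (forall y, Pset u y -> y <= M) ->
  forall y, Pset v y -> y <= M + h v - h u.
Proof.
  intros Huv Hh HM y [n [x [Hp ->]]].
  pose proof (part_range x n v Hp) as Hr.
  assert (C1 : forall k, (k <= n)%nat -> x k <= u -> posp (e 0) + psum x k + posp (e u - e (x k)) <= M).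
  { intros k Hk Hxk. apply HM. apply (Pset_ext x k u u); [|lra].
    destruct Hp as [H0 [H1 H2]]. split; [exact H0|split]. intros; apply H1; lia. exact Hxk. }
  assert (C2 : forall k, (k <= n)%nat -> u < x k -> posp (e 0) + psum x k <= M + h (x k) - h u).
  { induction k; intros Hk Hxk.
    - destruct Hp as [H0 _]. lra.
    - simpl. destruct (Rle_dec (x k) u).
      + specialize (C1 k ltac:(lia) r). specialize (Hr (S k) Hk) as Hr1.
        pose proof (posp_lip (e (x (S k)) - e (x k)) (e u - e (x k))) as P1.
        replace (e (x (S k)) - e (x k) - (e u - e (x k))) with (e (x (S k)) - e u) in P1 by ring.
        assert (posp (e (x (S k)) - e (x k)) <= posp (e u - e (x k)) + posp (e (x (S k)) - e u)).
        { unfold posp, Rmax. repeat destruct (Rle_dec _ _); lra. }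
        pose proof (Hh u (x (S k)) ltac:(lra) ltac:(lra)). lra.
      + specialize (IHk ltac:(lia) ltac:(lra)). specialize (Hr (S k) Hk) as Hr1.
        pose proof (part_le x n v Hp k (S k) ltac:(lia)).
        pose proof (Hh (x k) (x (S k)) ltac:(lra) ltac:(lra)). lra. }
  assert (Hhuv : h u <= h v). { pose proof (Hh u v ltac:(lra) ltac:(lra)). pose proof (posp_ge0 (e v - e u)). lra. }
  destruct (Rle_dec (x n) u).
  - specialize (C1 n ltac:(lia) r). pose proof (posp_ge0 (e u - e (x n))). lra.
  - specialize (C2 n ltac:(lia) ltac:(lra)). specialize (Hr n ltac:(lia)).
    destruct (Req_dec (x n) v) as [E|E]. rewrite E in C2. lra.
    pose proof (Hh (x n) v ltac:(lra) ltac:(lra)). pose proof (posp_ge0 (e v - e (x n))). lra.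
Qed.

Lemma bnd_prop u v h : 0 <= u <= v ->
  (forall x x', u <= x <= x' -> x' <= v -> posp (e x' - e x) <= h x' - h x) ->
  bnd u -> bnd v /\ PV v <= PV u + h v - h u.
Proof.
  intros Huv Hh Hb.
  assert (forall y, Pset v y -> y <= PV u + h v - h u).
  { apply PV_bound; auto. intros y Hy. apply PV_ge; auto. lra. }
  split. eexists; exact H. apply PV_le. lra. exact H.
Qed.

Lemma PV_super u v : 0 <= u <= v -> bnd v -> PV u + posp (e v - e u) <= PV v.
Proof.
  intros Huv Hb.
  assert (PV u <= PV v - posp (e v - e u)); [|lra].
  apply PV_le. lra. intros y [n [x [Hp ->]]].
  pose proof (extend_part x n u u Hp ltac:(lra)) as Hp2.
  pose proof (Pset_ext (extend x n u) (S n) u v Hp2 ltac:(lra)) as Hq.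
  rewrite extend_psum in Hq.
  assert (extend x n u (S n) = u) as Eu by (unfold extend; destruct (Nat.leb_spec (S n) n); [lia|reflexivity]).
  rewrite Eu in Hq.
  pose proof (PV_ge v _ ltac:(lra) Hb Hq). pose proof (posp_ge0 (e u - e (x n))). lra.
Qed.

Lemma Pset_zero y : Pset 0 y -> y = posp (e 0).
Proof.
  intros [n [x [Hp ->]]].
  assert (psum x n = 0).
  { pose proof (part_range x n 0 Hp) as Hr. clear Hp.
    induction n. reflexivity. simpl. rewrite IHn by (intros; apply Hr; lia).
    pose proof (Hr n ltac:(lia)). pose proof (Hr (S n) ltac:(lia)).
    replace (x (S n)) with (x n) by lra. rewrite Rminus_diag. rewrite posp_neg; lra. }
  lra.
Qed.

Lemma bnd_zero : bnd 0.
Proof. exists (posp (e 0)). intros y Hy. rewrite (Pset_zero y Hy). lra. Qed.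

Lemma PV_zero : PV 0 = posp (e 0).
Proof.
  apply Rle_antisym.
  - apply PV_le. lra. intros y Hy. rewrite (Pset_zero y Hy). lra.
  - apply PV_ge. lra. apply bnd_zero. apply Pset_nonempty. lra.
Qed.

Lemma bnd_mono s t : s <= t -> bnd t -> bnd s.
Proof. intros Hst [M HM]. exists M. intros y Hy. apply HM. eapply Pset_mono; eauto. Qed.

Lemma PV_mono s t : 0 <= s <= t -> bnd t -> PV s <= PV t.
Proof. intros. pose proof (PV_super s t H H0). pose proof (posp_ge0 (e t - e s)). lra. Qed.

Lemma PV_dn u v : 0 <= u <= v -> bnd u -> (forall y z, u <= y <= z -> z <= v -> e z <= e y) ->
  bnd v /\ PV v = PV u.
Proof.
  intros Huv Hb Hm.
  destruct (bnd_prop u v (fun _ => 0) Huv) as [H1 H2].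
  { intros x x' Hx Hx'. rewrite posp_neg. lra. specialize (Hm x x' Hx Hx'). lra. }
  exact Hb. split; [exact H1|]. pose proof (PV_mono u v Huv H1). lra.
Qed.

Lemma PV_up u v : 0 <= u <= v -> bnd u -> (forall y z, u <= y <= z -> z <= v -> e y <= e z) ->
  bnd v /\ PV v = PV u + e v - e u.
Proof.
  intros Huv Hb Hm.
  destruct (bnd_prop u v e Huv) as [H1 H2].
  { intros x x' Hx Hx'. rewrite posp_pos. lra. specialize (Hm x x' Hx Hx'). lra. }
  exact Hb. split; [exact H1|]. pose proof (PV_super u v Huv H1). pose proof (posp_ge (e v - e u)). lra.
Qed.

End PVdef.

Definition osc_part (f : R -> R) (c T : R) (m : nat) (t : nat -> R) : Prop :=
  t O = 0 /\ t m = T /\ (forall i, (i < m)%nat -> t i < t (S i)) /\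
  (forall i, (i < m)%nat -> forall y z, t i <= y < t (S i) -> t i <= z < t (S i) -> Rabs (f y - f z) < c).

Lemma osc_extend f c T m t y : osc_part f c T m t -> T < y ->
  (forall u v, T <= u < y -> T <= v < y -> Rabs (f u - f v) < c) ->
  osc_part f c y (S m) (fun i => if Nat.leb i m then t i else y).
Proof.
  intros [H0 [H1 [H2 H3]]] Hy Hw. split; [|split; [|split]].
  - simpl. exact H0.
  - destruct (Nat.leb_spec (S m) m). lia. reflexivity.
  - intros i Hi. destruct (Nat.leb_spec i m), (Nat.leb_spec (S i) m); try lia.
    apply H2; lia. replace i with m by lia. lra.
  - intros i Hi. destruct (Nat.leb_spec i m), (Nat.leb_spec (S i) m); try lia.
    apply H3; lia. replace i with m by lia. rewrite H1. exact Hw.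
Qed.

Lemma osc_exists f c T : is_D f -> 0 < c -> 0 <= T -> exists m t, osc_part f c T m t.
Proof.
  intros Hf Hc HT.
  enough (HH : forall x, 0 <= x <= T -> exists m t, osc_part f c x m t) by (apply HH; lra).
  apply (real_ind 0 T (fun x => exists m t, osc_part f c x m t)); [exact HT| | | ].
  - exists O, (fun _ => 0). split; [reflexivity|split; [reflexivity|split]]; intros; lia.
  - intros x Hx Hall. destruct (Hall x ltac:(lra)) as [m [t Hp]].
    destruct (Hf x ltac:(lra)) as [Hr _]. destruct (Hr (c/2)) as [d [Hd Hd2]]; [lra|].
    exists d. split; [exact Hd|]. intros y Hy. exists (S m), (fun i => if Nat.leb i m then t i else y).
    apply (osc_extend f c x m t y). exact Hp. lra. intros u v Hu Hv.
    pose proof (Hd2 u ltac:(lra)). pose proof (Hd2 v ltac:(lra)).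
    replace (f u - f v) with ((f u - f x) - (f v - f x)) by ring.
    eapply Rle_lt_trans. apply Rabs_triang. rewrite Rabs_Ropp. lra.
  - intros x Hx Hall. destruct (Hf x ltac:(lra)) as [_ Hl]. destruct (Hl ltac:(lra)) as [l Hll].
    destruct (Hll (c/2)) as [d [Hd Hd2]]; [lra|].
    set (y0 := Rmax 0 (x - d/2)).
    assert (0 <= y0) by apply Rmax_l. assert (x - d/2 <= y0) by apply Rmax_r.
    assert (y0 < x). { unfold y0, Rmax. destruct (Rle_dec 0 (x - d/2)); lra. }
    destruct (Hall y0 ltac:(lra)) as [m [t Hp]].
    exists (S m), (fun i => if Nat.leb i m then t i else x).
    apply (osc_extend f c y0 m t x). exact Hp. lra. intros u v Hu Hv.
    pose proof (Hd2 u ltac:(lra)). pose proof (Hd2 v ltac:(lra)).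
    replace (f u - f v) with ((f u - l) - (f v - l)) by ring.
    eapply Rle_lt_trans. apply Rabs_triang. rewrite Rabs_Ropp. lra.
Qed.

Lemma osc_mono f c T m t : osc_part f c T m t -> forall i j, (i <= j <= m)%nat -> t i <= t j.
Proof.
  intros [H0 [H1 [H2 H3]]] i j [Hij Hjm]. induction j.
  replace i with O by lia. lra.
  destruct (Nat.eq_dec i (S j)) as [->|E]. lra.
  specialize (IHj ltac:(lia) ltac:(lia)). specialize (H2 j ltac:(lia)). lra.
Qed.

Lemma osc_cover f c T m t : osc_part f c T m t -> forall s, 0 <= s < T ->
  exists i, (i < m)%nat /\ t i <= s < t (S i).
Proof.
  intros Hp. assert (forall k, (k <= m)%nat -> forall s, 0 <= s < t k -> exists i, (i < k)%nat /\ t i <= s < t (S i)).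
  { induction k; intros Hk s Hs. destruct Hp as [H0 _]. lra.
    destruct (Rlt_dec s (t k)). destruct (IHk ltac:(lia) s ltac:(lra)) as [i [Hi Hi2]]. exists i. split; [lia|exact Hi2].
    exists k. split; [lia|lra]. }
  intros s Hs. pose proof Hp as [H0 [H1 _]]. rewrite <- H1 in Hs. apply (H m (le_n m)). lra.
Qed.

Section PVee.
Variable a : R.
Hypothesis Ha : 0 < a.
Variable psi : R -> R.
Hypothesis Hpsi : is_D psi.

Notation e := (ee a psi).
Notation pbar := (pb a psi).

Lemma piece_class u w : 0 <= u < w -> (forall y z, u <= y < w -> u <= z < w -> Rabs (pbar y - pbar z) < a/3) ->
  (forall y z, u <= y <= z -> z < w -> e z <= e y) \/ (forall y z, u <= y <= z -> z < w -> e y <= e z).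
Proof.
  intros Huw Hosc. destruct (Rle_dec (a/2) (pbar u)).
  - left. intros y z Hy Hz. apply (ee_down a psi Hpsi y z (a/6)). lra. lra.
    intros x Hx. specialize (Hosc x u ltac:(lra) ltac:(lra)). apply Rabs_def2 in Hosc. lra. lra. lra.
  - right. intros y z Hy Hz. apply (ee_up a psi Hpsi y z (a/6)). lra. lra.
    intros x Hx. specialize (Hosc x u ltac:(lra) ltac:(lra)). apply Rabs_def2 in Hosc. lra. lra. lra.
Qed.

Lemma ee_bnd T : 0 <= T -> bnd e T.
Proof.
  intros HT. destruct (osc_exists pbar (a/3) T (pb_D a Ha psi Hpsi) ltac:(lra) HT) as [m [t Hp]].
  destruct (D_bounded e T (ee_D a Ha psi Hpsi) HT) as [B HB].
  assert (HB0 : 0 <= B). { specialize (HB 0 ltac:(lra)). pose proof (Rabs_pos (e 0)). lra. }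
  assert (Hmono := osc_mono _ _ _ _ _ Hp).
  destruct Hp as [H0 [H1 [H2 H3]]].
  assert (forall k, (k <= m)%nat -> bnd e (t k)).
  { induction k; intros Hk. rewrite H0. apply bnd_zero.
    specialize (IHk ltac:(lia)).
    assert (Hr : forall x, t k <= x <= t (S k) -> 0 <= x <= T).
    { intros x Hx. pose proof (Hmono O k ltac:(lia)). pose proof (Hmono (S k) m ltac:(lia)). lra. }
    pose proof (H2 k ltac:(lia)) as Hlt.
    assert (0 <= t k) by (pose proof (Hr (t k) ltac:(lra)); lra).
    destruct (piece_class (t k) (t (S k)) ltac:(lra) (H3 k ltac:(lia))) as [Hd|Hu].
    - set (h := fun x => if Rlt_dec x (t (S k)) then 0 else 2 * B).
      destruct (bnd_prop e (t k) (t (S k)) h ltac:(lra)) as [Hb _]; [|exact IHk|exact Hb].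
      intros x x' Hx Hx'. unfold h. destruct (Rlt_dec x' (t (S k))), (Rlt_dec x (t (S k))); try lra.
      + rewrite posp_neg. lra. specialize (Hd x x' ltac:(lra) r). lra.
      + apply posp_lub; [|lra]. pose proof (HB x (Hr x ltac:(lra))). pose proof (HB x' (Hr x' ltac:(lra))).
        apply Rabs_le_b in H4. apply Rabs_le_b in H5. lra. 
      + replace x with x' by lra. rewrite Rminus_diag, posp_neg; lra.
    - set (h := fun x => if Rlt_dec x (t (S k)) then e x else 3 * B).
      destruct (bnd_prop e (t k) (t (S k)) h ltac:(lra)) as [Hb _]; [|exact IHk|exact Hb].
      intros x x' Hx Hx'. unfold h. destruct (Rlt_dec x' (t (S k))), (Rlt_dec x (t (S k))); try lra.
      + rewrite posp_pos. lra. specialize (Hu x x' ltac:(lra) r). lra.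
      + pose proof (HB x (Hr x ltac:(lra))). pose proof (HB x' (Hr x' ltac:(lra))).
        apply Rabs_le_b in H4. apply Rabs_le_b in H5.
        apply posp_lub; lra.
      + replace x with x' by lra. rewrite Rminus_diag, posp_neg; lra. }
  rewrite <- H1. apply H. lia.
Qed.

Definition eta_l t := PV e t.
Definition eta_u t := PV e t - e t.

Lemma eta_l_rc t : 0 <= t -> right_cont eta_l t.
Proof.
  intros Ht eps He. destruct (ee_rnbhd a Ha psi Hpsi t Ht) as [d [Hd Hcl]].
  destruct (ee_D a Ha psi Hpsi t Ht) as [Her _]. destruct (Her eps He) as [d2 [Hd2 Hd22]].
  exists (Rmin d d2). split. apply Rmin_glb_lt; lra.
  assert (Rmin d d2 <= d) by apply Rmin_l. assert (Rmin d d2 <= d2) by apply Rmin_r.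
  intros s Hs. unfold eta_l. destruct Hcl as [Hdn|Hup].
  - destruct (PV_dn e t s ltac:(lra) (ee_bnd t Ht)) as [_ E].
    intros y z Hy Hz. apply Hdn; lra. rewrite E, Rminus_diag, Rabs_R0. lra.
  - destruct (PV_up e t s ltac:(lra) (ee_bnd t Ht)) as [_ E].
    intros y z Hy Hz. apply Hup; lra. rewrite E.
    replace (PV e t + e s - e t - PV e t) with (e s - e t) by ring. apply Hd22. lra.
Qed.

Lemma eta_l_lc t : 0 < t -> left_cauchy eta_l t.
Proof.
  intros Ht eps He. destruct (ee_lnbhd a Ha psi Hpsi t Ht) as [d [Hd Hcl]].
  destruct (ee_D a Ha psi Hpsi t ltac:(lra)) as [_ Hel]. destruct (Hel Ht) as [l Hl].
  destruct (left_lim_cauchy _ _ _ Hl eps He) as [d2 [Hd2 Hd22]].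
  exists (Rmin d d2). split. apply Rmin_glb_lt; lra.
  assert (Rmin d d2 <= d) by apply Rmin_l. assert (Rmin d d2 <= d2) by apply Rmin_r.
  assert (key : forall x y, t - Rmin d d2 < y <= x -> x < t -> Rabs (eta_l x - eta_l y) < eps).
  { intros x y Hy Hx. unfold eta_l. destruct Hcl as [Hdn|Hup].
    - destruct (PV_dn e y x ltac:(lra) (ee_bnd y ltac:(lra))) as [_ E].
      intros y' z' Hy' Hz'. apply Hdn; lra. rewrite E, Rminus_diag, Rabs_R0. lra.
    - destruct (PV_up e y x ltac:(lra) (ee_bnd y ltac:(lra))) as [_ E].
      intros y' z' Hy' Hz'. apply Hup; lra. rewrite E.
      replace (PV e y + e x - e y - PV e y) with (e x - e y) by ring. apply Hd22; lra. }
  intros x y Hx Hy. destruct (Rle_dec y x).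
  - apply key; lra.
  - rewrite <- Rabs_Ropp. replace (- (eta_l x - eta_l y)) with (eta_l y - eta_l x) by ring. apply key; lra.
Qed.

Lemma eta_l_D : is_D eta_l.
Proof. intros t Ht. split. now apply eta_l_rc. intros Htp. apply cauchy_left_lim. now apply eta_l_lc. Qed.

Lemma eta_u_D : is_D eta_u.
Proof. apply is_D_minus. exact eta_l_D. exact (ee_D a Ha psi Hpsi). Qed.

Lemma eta_l_I : is_I eta_l.
Proof.
  split. exact eta_l_D. intros s t Hst. unfold eta_l. apply PV_mono. exact Hst. apply ee_bnd. lra.
Qed.

Lemma eta_u_I : is_I eta_u.
Proof.
  split. exact eta_u_D. intros s t Hst. unfold eta_u.
  pose proof (PV_super e s t Hst (ee_bnd t ltac:(lra))). pose proof (posp_ge (e t - e s)). lra.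
Qed.

Lemma eta_l_0 : 0 <= eta_l 0.
Proof. unfold eta_l. rewrite PV_zero. apply posp_ge0. Qed.

Lemma eta_u_0 : 0 <= eta_u 0.
Proof. unfold eta_u. rewrite PV_zero. pose proof (posp_ge (e 0)). lra. Qed.

End PVee.

Definition dec3 (n : nat) : nat * nat * nat :=
  let (k, r) := Cantor.of_nat n in let (i, j) := Cantor.of_nat r in (k, i, j).

Lemma dec3_surj k i j : exists n, dec3 n = (k, i, j).
Proof.
  exists (Cantor.to_nat (k, Cantor.to_nat (i, j))). unfold dec3.
  rewrite Cantor.cancel_of_to. rewrite Cantor.cancel_of_to. reflexivity.
Qed.

Lemma fchoice {B : Type} (P : nat -> B -> Prop) : (forall n, exists b, P n b) -> exists f, forall n, P n (f n).
Proof.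
  intros H. exists (fun n => proj1_sig (constructive_indefinite_description _ (H n))).
  intros n. exact (proj2_sig (constructive_indefinite_description _ (H n))).
Qed.

Lemma pow2_pos n : 0 < 2 ^ n.
Proof. apply pow_lt. lra. Qed.

Lemma LSN_gen (F : R -> R) (A : R -> Prop) (Sp : nat -> nat -> nat -> R -> Prop) :
  (A 0 -> F 0 = 0) ->
  (forall s, 0 < s -> A s -> exists k i j, Sp k i j s) ->
  (forall k i j dl, 0 < dl -> exists al be, 0 <= al <= be /\ F be - F al <= dl /\
       forall s, Sp k i j s -> al < s <= be) ->
  LS_null F A.
Proof.
  intros H0 Hcov Hint. split; [exact H0|].
  intros eps He.
  assert (Hn : forall n, exists p : R * R, 0 <= fst p <= snd p /\ F (snd p) - F (fst p) <= eps / 2 ^ (S n) /\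
     (let '(k, i, j) := dec3 n in forall s, Sp k i j s -> fst p < s <= snd p)).
  { intros n. destruct (dec3 n) as [[k i] j] eqn:E.
    destruct (Hint k i j (eps / 2 ^ (S n))) as [al [be [H1 [H2 H3]]]].
    apply Rdiv_lt_0_compat. exact He. apply pow2_pos.
    exists (al, be). simpl. auto. }
  destruct (fchoice _ Hn) as [f Hf].
  exists (fun n => fst (f n)), (fun n => snd (f n)). split; [|split].
  - intros n. apply Hf.
  - intros s Hs HA. destruct (Hcov s Hs HA) as [k [i [j HS]]].
    destruct (dec3_surj k i j) as [n En]. exists n. destruct (Hf n) as [_ [_ H3]].
    rewrite En in H3. apply H3. exact HS.
  - assert (forall N, cover_sum F (fun n => fst (f n)) (fun n => snd (f n)) N <= eps - eps / 2 ^ N).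
    { induction N; simpl. lra.
      destruct (Hf N) as [_ [H2 _]].
      assert (eps / (2 * 2 ^ N) = (eps / 2 ^ N) / 2).
      { field. apply Rgt_not_eq. apply pow2_pos. }
      simpl in H2. rewrite H in *. lra. }
    intros N. specialize (H N). assert (0 < eps / 2 ^ N) by (apply Rdiv_lt_0_compat; [lra|apply pow2_pos]). lra.
Qed.

Lemma LSN_pieces (F : R -> R) (A : R -> Prop) (m : nat -> nat) (t : nat -> nat -> R) (G : R -> R -> Prop) :
  (forall s t, 0 <= s <= t -> F s <= F t) ->
  (A 0 -> F 0 = 0) ->
  (forall k i, (i < m k)%nat -> 0 <= t k i < t k (S i)) ->
  (forall u w be, G u w -> 0 <= u <= be -> be < w -> F be = F u) ->
  (forall u w, G u w -> 0 < u -> forall dl, 0 < dl -> exists y, 0 <= y < u /\ F u - F y <= dl) ->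
  (forall s, 0 < s -> A s -> exists k i, (i < m k)%nat /\ t k i <= s < t k (S i) /\ G (t k i) (t k (S i))) ->
  LS_null F A.
Proof.
  intros Hmono H0 Hord Hzero Hatom Hcov.
  set (be := fun k i j => t k (S i) - (t k (S i) - t k i) / (INR j + 2)).
  apply (LSN_gen F A (fun k i j s => (i < m k)%nat /\ G (t k i) (t k (S i)) /\ t k i <= s <= be k i j /\ 0 < s)).
  - exact H0.
  - intros s Hs HA. destruct (Hcov s Hs HA) as [k [i [Hi [Hts HG]]]].
    destruct (INR_small ((t k (S i) - s) / (t k (S i) - t k i))) as [N HN].
    { apply Rdiv_lt_0_compat; lra. }
    exists k, i, N. split; [exact Hi|split; [exact HG|]]. split; [|exact Hs]. split; [lra|].
    specialize (HN N (le_n N)). destruct HN as [_ HN]. pose proof (Hord k i Hi).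
    unfold be. assert (0 < INR N + 1) by (pose proof (pos_INR N); lra).
    assert ((t k (S i) - t k i) / (INR N + 2) <= t k (S i) - s); [|lra].
    assert ((t k (S i) - t k i) / (INR N + 2) <= (t k (S i) - t k i) / (INR N + 1)).
    { unfold Rdiv. apply Rmult_le_compat_l. lra. apply Rinv_le_contravar; lra. }
    assert ((t k (S i) - t k i) / (INR N + 1) = (t k (S i) - t k i) * / (INR N + 1)) by reflexivity.
    assert (Q5 : (t k (S i) - t k i) * / (INR N + 1) < (t k (S i) - t k i) * ((t k (S i) - s) / (t k (S i) - t k i))).
    { apply Rmult_lt_compat_l; lra. }
    replace ((t k (S i) - t k i) * ((t k (S i) - s) / (t k (S i) - t k i))) with (t k (S i) - s) in Q5
      by (field; lra). lra.
  - intros k i j dl Hdl.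
    destruct (classic ((i < m k)%nat /\ G (t k i) (t k (S i)))) as [[Hi HG]|Hn].
    + pose proof (Hord k i Hi) as Ho.
      assert (Hbe : t k i <= be k i j < t k (S i)).
      { unfold be. assert (0 < INR j + 2) by (pose proof (pos_INR j); lra).
        assert (0 < (t k (S i) - t k i) / (INR j + 2)) by (apply Rdiv_lt_0_compat; lra).
        assert ((t k (S i) - t k i) / (INR j + 2) <= t k (S i) - t k i).
        { unfold Rdiv. rewrite <- (Rmult_1_r (t k (S i) - t k i)) at 2. apply Rmult_le_compat_l. lra.
          rewrite <- Rinv_1. pose proof (pos_INR j). apply Rinv_le_contravar; lra. }
        lra. }
      pose proof (Hzero _ _ (be k i j) HG ltac:(lra) ltac:(lra)) as Hz.
      destruct (Req_dec (t k i) 0) as [E0|E0].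
      * exists 0, (be k i j). split; [lra|split].
        rewrite Hz, E0. lra.
        intros s [_ [_ [Hs1 Hs2]]]. lra.
      * destruct (Hatom _ _ HG ltac:(lra) dl Hdl) as [y [Hy1 Hy2]].
        exists y, (be k i j). split; [lra|split]. rewrite Hz. lra.
        intros s [_ [_ [Hs1 Hs2]]]. lra.
    + exists 0, 0. split; [lra|split]. lra.
      intros s [Hi [HG _]]. exfalso. apply Hn. split; assumption.
Qed.

Section Exist.
Variable a : R.
Hypothesis Ha : 0 < a.
Variable psi : R -> R.
Hypothesis Hpsi : is_D psi.

Notation e := (ee a psi).
Notation pbar := (pb a psi).
Notation El := (eta_l a psi).
Notation Eu := (eta_u a psi).

Lemma e_lim t : 0 < t -> exists le, is_left_lim e t le.
Proof. intros. destruct (ee_D a Ha psi Hpsi t ltac:(lra)) as [_ H1]. now apply H1. Qed.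

Lemma lim_le_dn t le d y : is_left_lim e t le -> mono_dn e (fun x => t - d < x < t) -> t - d < y < t -> le <= e y.
Proof.
  intros Hl Hm Hy. apply (left_lim_le e t le (e y) (t - y) Hl ltac:(lra)).
  intros x Hx. apply Hm; lra.
Qed.

Lemma lim_ge_up t le d y : is_left_lim e t le -> mono_up e (fun x => t - d < x < t) -> t - d < y < t -> e y <= le.
Proof.
  intros Hl Hm Hy. apply (left_lim_ge e t le (e y) (t - y) Hl ltac:(lra)).
  intros x Hx. apply Hm; lra.
Qed.

Lemma atom_l t : 0 < t -> 0 < pbar t -> forall dl, 0 < dl -> exists y, 0 <= y < t /\ El t - El y <= dl.
Proof.
  intros Ht Hp dl Hdl. destruct (ee_lnbhd a Ha psi Hpsi t Ht) as [d [Hd Hcl]].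
  destruct (e_lim t Ht) as [le Hle]. pose proof (ee_jump_pos a Ha psi Hpsi t le Ht Hle Hp) as Hj.
  destruct (Hle dl Hdl) as [d2 [Hd2 Hd22]].
  set (y := t - Rmin d d2 / 2).
  assert (0 < Rmin d d2) by (apply Rmin_glb_lt; lra).
  assert (Rmin d d2 <= d) by apply Rmin_l. assert (Rmin d d2 <= d2) by apply Rmin_r.
  exists y. split. unfold y; lra. unfold eta_l.
  destruct Hcl as [Hdn|Hup].
  - destruct (PV_dn e y t ltac:(unfold y; lra) (ee_bnd a Ha psi Hpsi y ltac:(unfold y; lra))) as [_ E].
    + intros y' z' Hy' Hz'. destruct (Req_dec z' t) as [->|Ez].
      * destruct (Req_dec y' t) as [->|Ey]. lra.
        pose proof (lim_le_dn t le d y' Hle Hdn ltac:(unfold y in *; lra)). lra.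
      * apply Hdn; unfold y in *; lra.
    + rewrite E. lra.
  - set (h := fun x => if Rlt_dec x t then e x else le).
    destruct (bnd_prop e y t h ltac:(unfold y; lra)) as [_ Hb].
    + intros x x' Hx Hx'. unfold h. destruct (Rlt_dec x' t), (Rlt_dec x t); try lra.
      * rewrite posp_pos. lra. assert (e x <= e x') by (apply Hup; unfold y in *; lra). lra.
      * assert (x' = t) by lra. subst x'. pose proof (lim_ge_up t le d x Hle Hup ltac:(unfold y in *; lra)).
        apply posp_lub; lra.
      * replace x with x' by lra. rewrite Rminus_diag, posp_neg; lra.
    + apply ee_bnd; auto. unfold y; lra.
    + unfold h in Hb. destruct (Rlt_dec t t). lra. destruct (Rlt_dec y t); [|unfold y in *; lra].
      specialize (Hd22 y ltac:(unfold y; lra)). apply Rabs_def2 in Hd22. lra.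
Qed.

Lemma atom_u t : 0 < t -> pbar t < a -> forall dl, 0 < dl -> exists y, 0 <= y < t /\ Eu t - Eu y <= dl.
Proof.
  intros Ht Hp dl Hdl. destruct (ee_lnbhd a Ha psi Hpsi t Ht) as [d [Hd Hcl]].
  destruct (e_lim t Ht) as [le Hle]. pose proof (ee_jump_lt a Ha psi Hpsi t le Ht Hle Hp) as Hj.
  destruct (Hle dl Hdl) as [d2 [Hd2 Hd22]].
  set (y := t - Rmin d d2 / 2).
  assert (0 < Rmin d d2) by (apply Rmin_glb_lt; lra).
  assert (Rmin d d2 <= d) by apply Rmin_l. assert (Rmin d d2 <= d2) by apply Rmin_r.
  exists y. split. unfold y; lra. unfold eta_u.
  destruct Hcl as [Hdn|Hup].
  - set (h := fun x => if Rlt_dec x t then 0 else e t - le).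
    destruct (bnd_prop e y t h ltac:(unfold y; lra)) as [_ Hb].
    + intros x x' Hx Hx'. unfold h. destruct (Rlt_dec x' t), (Rlt_dec x t); try lra.
      * rewrite posp_neg. lra. assert (e x' <= e x) by (apply Hdn; unfold y in *; lra). lra.
      * assert (x' = t) by lra. subst x'. pose proof (lim_le_dn t le d x Hle Hdn ltac:(unfold y in *; lra)).
        apply posp_lub; lra.
      * replace x with x' by lra. rewrite Rminus_diag, posp_neg; lra.
    + apply ee_bnd; auto. unfold y; lra.
    + unfold h in Hb. destruct (Rlt_dec t t). lra. destruct (Rlt_dec y t); [|unfold y in *; lra].
      specialize (Hd22 y ltac:(unfold y; lra)). apply Rabs_def2 in Hd22. lra.
  - destruct (PV_up e y t ltac:(unfold y; lra) (ee_bnd a Ha psi Hpsi y ltac:(unfold y; lra))) as [_ E].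
    + intros y' z' Hy' Hz'. destruct (Req_dec z' t) as [->|Ez].
      * destruct (Req_dec y' t) as [->|Ey]. lra.
        pose proof (lim_ge_up t le d y' Hle Hup ltac:(unfold y in *; lra)). lra.
      * apply Hup; unfold y in *; lra.
    + rewrite E. lra.
Qed.

Definition Gl u w := u < w /\ exists c, 0 < c /\ forall x, u <= x < w -> c <= pbar x.
Definition Gu u w := u < w /\ exists c, 0 < c /\ forall x, u <= x < w -> pbar x <= a - c.

Lemma zero_l u w be : Gl u w -> 0 <= u <= be -> be < w -> El be = El u.
Proof.
  intros [_ [c [Hc Hg]]] Hu Hbe. unfold eta_l.
  destruct (PV_dn e u be Hu (ee_bnd a Ha psi Hpsi u ltac:(lra))) as [_ E]; [|exact E].
  intros y z Hy Hz. apply (ee_down a psi Hpsi u be c); auto; try lra.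
  intros x Hx. apply Hg. lra.
Qed.

Lemma zero_u u w be : Gu u w -> 0 <= u <= be -> be < w -> Eu be = Eu u.
Proof.
  intros [_ [c [Hc Hg]]] Hu Hbe. unfold eta_u.
  destruct (PV_up e u be Hu (ee_bnd a Ha psi Hpsi u ltac:(lra))) as [_ E]; [|rewrite E; ring].
  intros y z Hy Hz. apply (ee_up a psi Hpsi u be c); auto; try lra.
  intros x Hx. apply Hg. lra.
Qed.

Lemma levels : exists (m : nat -> nat) (t : nat -> nat -> R),
  forall k, osc_part pbar (/ (INR k + 1)) (INR k + 1) (m k) (t k).
Proof.
  assert (H : forall k, exists p : nat * (nat -> R), osc_part pbar (/ (INR k + 1)) (INR k + 1) (fst p) (snd p)).
  { intros k. destruct (osc_exists pbar (/ (INR k + 1)) (INR k + 1) (pb_D a Ha psi Hpsi)) as [m [t Hp]].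
    apply Rinv_0_lt_compat. pose proof (pos_INR k); lra. pose proof (pos_INR k); lra.
    exists (m, t). exact Hp. }
  destruct (fchoice _ H) as [f Hf]. exists (fun k => fst (f k)), (fun k => snd (f k)). exact Hf.
Qed.

Lemma choose_level s c : 0 <= s -> 0 < c -> exists k, / (INR k + 1) < c /\ s < INR k + 1.
Proof.
  intros Hs Hc. destruct (INR_small c Hc) as [N1 H1].
  destruct (INR_small (/ (s + 1))) as [N2 H2]. apply Rinv_0_lt_compat; lra.
  exists (max N1 N2). split. apply H1. lia. specialize (H2 (max N1 N2) ltac:(lia)).
  destruct H2 as [_ H2]. pose proof (pos_INR (max N1 N2)).
  destruct (Rlt_dec s (INR (max N1 N2) + 1)) as [Hl|Hl]; [exact Hl|].
  assert (/ (s + 1) <= / (INR (Init.Nat.max N1 N2) + 1)) by (apply Rinv_le_contravar; lra). lra.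
Qed.

Lemma pieces_ord m t : (forall k, osc_part pbar (/ (INR k + 1)) (INR k + 1) (m k) (t k)) ->
  forall k i, (i < m k)%nat -> 0 <= t k i < t k (S i).
Proof.
  intros Hp k i Hi. pose proof (osc_mono _ _ _ _ _ (Hp k) O i ltac:(lia)).
  destruct (Hp k) as [H0 [_ [H2 _]]]. specialize (H2 i Hi). lra.
Qed.

Lemma LS_l : LS_null El (fun s => 0 <= s /\ pbar s > 0).
Proof.
  destruct levels as [m [t Hp]].
  apply (LSN_pieces El _ m t Gl).
  - intros s u Hsu. apply (proj2 (eta_l_I a Ha psi Hpsi)). exact Hsu.
  - intros [_ H0]. unfold eta_l. rewrite PV_zero. apply posp_neg. apply ee_zero_pos; auto.
  - apply pieces_ord. exact Hp.
  - apply zero_l.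
  - intros u w [Huw [c [Hc Hg]]] Hu dl Hdl. apply atom_l; auto. specialize (Hg u ltac:(lra)). lra.
  - intros s Hs [Hs0 Hps]. destruct (choose_level s (pbar s / 2)) as [k [Hk1 Hk2]]; [lra|lra|].
    destruct (osc_cover _ _ _ _ _ (Hp k) s ltac:(lra)) as [i [Hi Hts]].
    exists k, i. split; [exact Hi|split; [exact Hts|]].
    pose proof (pieces_ord m t Hp k i Hi). split. lra.
    exists (pbar s / 2). split. lra. intros x Hx.
    destruct (Hp k) as [_ [_ [_ H4]]]. specialize (H4 i Hi x s ltac:(lra) ltac:(lra)).
    apply Rabs_def2 in H4. lra.
Qed.

Lemma LS_u : LS_null Eu (fun s => 0 <= s /\ pbar s < a).
Proof.
  destruct levels as [m [t Hp]].
  apply (LSN_pieces Eu _ m t Gu).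
  - intros s u Hsu. apply (proj2 (eta_u_I a Ha psi Hpsi)). exact Hsu.
  - intros [_ H0]. unfold eta_u. rewrite PV_zero. rewrite posp_pos. ring. apply ee_zero_lt; auto.
  - apply pieces_ord. exact Hp.
  - apply zero_u.
  - intros u w [Huw [c [Hc Hg]]] Hu dl Hdl. apply atom_u; auto. specialize (Hg u ltac:(lra)). lra.
  - intros s Hs [Hs0 Hps]. destruct (choose_level s ((a - pbar s) / 2)) as [k [Hk1 Hk2]]; [lra|lra|].
    destruct (osc_cover _ _ _ _ _ (Hp k) s ltac:(lra)) as [i [Hi Hts]].
    exists k, i. split; [exact Hi|split; [exact Hts|]].
    pose proof (pieces_ord m t Hp k i Hi). split. lra.
    exists ((a - pbar s) / 2). split. lra. intros x Hx.
    destruct (Hp k) as [_ [_ [_ H4]]]. specialize (H4 i Hi x s ltac:(lra) ltac:(lra)).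
    apply Rabs_def2 in H4. lra.
Qed.

Lemma var_bound T : 0 <= T -> exists M, forall (n : nat) (x : nat -> R),
    0 <= x O -> (forall i, (i < n)%nat -> x i <= x (S i)) -> x n <= T ->
    var_sum (fun t => pbar t - psi t) x n <= M.
Proof.
  intros HT. exists (El T + Eu T). intros n x H0 Hmon HxT.
  assert (Hge : forall k, (k <= n)%nat -> x O <= x k).
  { induction k; intros Hk. lra. specialize (IHk ltac:(lia)). specialize (Hmon k ltac:(lia)). lra. }
  destruct (eta_l_I a Ha psi Hpsi) as [_ Ml]. destruct (eta_u_I a Ha psi Hpsi) as [_ Mu].
  assert (forall k, (k <= n)%nat -> var_sum (fun t => pbar t - psi t) x k <= (El (x k) - El (x O)) + (Eu (x k) - Eu (x O))).
  { induction k; intros Hk; simpl. lra.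
    specialize (IHk ltac:(lia)). specialize (Hmon k ltac:(lia)). pose proof (Hge k ltac:(lia)).
    pose proof (Ml (x k) (x (S k)) ltac:(lra)). pose proof (Mu (x k) (x (S k)) ltac:(lra)).
    assert (Hd : pbar (x (S k)) - psi (x (S k)) - (pbar (x k) - psi (x k)) =
       (El (x (S k)) - El (x k)) - (Eu (x (S k)) - Eu (x k))).
    { unfold eta_u, eta_l, ee. ring. }
    rewrite Hd. unfold Rabs. destruct (Rcase_abs _); lra. }
  specialize (H n (le_n n)). pose proof (Hge n (le_n n)). pose proof (Ml (x n) T ltac:(lra)). pose proof (Mu (x n) T ltac:(lra)).
  pose proof (Ml 0 (x O) ltac:(lra)). pose proof (Mu 0 (x O) ltac:(lra)).
  pose proof (eta_l_0 a psi). pose proof (eta_u_0 a psi). lra.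
Qed.

Theorem existence : Skorokhod_sol a psi (Lambda a (Gamma0 psi)) (fun t => Lambda a (Gamma0 psi) t - psi t).
Proof.
  split; [|split; [|split]].
  - exact (pb_D a Ha psi Hpsi).
  - split. exact (ee_D a Ha psi Hpsi). apply var_bound.
  - intros t Ht. split. ring. exact (pb_range a Ha psi Hpsi t Ht).
  - exists El, Eu. split; [exact (eta_l_I a Ha psi Hpsi)|]. split; [exact (eta_u_I a Ha psi Hpsi)|].
    split; [exact (eta_l_0 a psi)|]. split; [exact (eta_u_0 a psi)|].
    split. intros t Ht. cbv beta. unfold eta_u, eta_l, ee, pb, ph. ring.
    split. exact LS_l. exact LS_u.
Qed.

End Exist.

Fixpoint fsum (c : nat -> R) (N : nat) : R :=
  match N with O => 0 | S k => fsum c k + c k end.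

Lemma fsum_mono c d N : (forall n, c n <= d n) -> fsum c N <= fsum d N.
Proof. intros H. induction N; simpl. lra. specialize (H N). lra. Qed.

Lemma fsum_N c N N' : (forall n, 0 <= c n) -> (N <= N')%nat -> fsum c N <= fsum c N'.
Proof. intros H HN. induction HN. lra. simpl. specialize (H m). lra. Qed.

Lemma fsum_one c N k : (forall n, 0 <= c n) -> (k < N)%nat -> c k <= fsum c N.
Proof.
  intros H Hk. induction N. lia. simpl. destruct (Nat.eq_dec k N) as [->|E].
  pose proof (fsum_N c O N H ltac:(lia)). simpl in H0. lra.
  specialize (IHN ltac:(lia)). specialize (H N). lra.
Qed.

Lemma fsum_minus c d N : fsum d N - fsum c N = fsum (fun n => d n - c n) N.
Proof. induction N; simpl. ring. rewrite <- IHN. ring. Qed.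

Lemma fsum_cover F a b N : fsum (fun n => F (b n) - F (a n)) N = cover_sum F a b N.
Proof. induction N; simpl. reflexivity. rewrite IHN. reflexivity. Qed.

Section Cover.
Variable F : R -> R.
Hypothesis HF : is_I F.

Lemma Fmono s t : 0 <= s <= t -> F s <= F t.
Proof. apply (proj2 HF). Qed.

Definition cl (u' z x : R) := Rmax u' (Rmin z x).

Lemma cl_self u' z : cl u' z u' = u'.
Proof. unfold cl. apply Rmax_left. apply Rmin_r. Qed.

Lemma cl_clip_mono u' p q y x : 0 <= u' -> p <= q -> u' <= y <= x ->
  F (cl u' q y) - F (cl u' p y) <= F (cl u' q x) - F (cl u' p x).
Proof.
  intros Hu Hpq Hyx. unfold cl.
  destruct (Rle_dec q u').
  - rewrite !(Rmax_left u'); try (apply Rle_trans with q; [apply Rmin_l|lra]); try lra.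
    all: try (apply Rle_trans with q; [apply Rmin_l|lra]).
    all: try (apply Rle_trans with p; [apply Rmin_l|lra]).
  - destruct (Rle_dec p u').
    + rewrite (Rmax_left u' (Rmin p y)), (Rmax_left u' (Rmin p x))
        by (apply Rle_trans with p; [apply Rmin_l|lra]).
      assert (F (Rmax u' (Rmin q y)) <= F (Rmax u' (Rmin q x))); [|lra].
      apply Fmono. split. eapply Rle_trans; [exact Hu|apply Rmax_l].
      unfold Rmax, Rmin. repeat destruct (Rle_dec _ _); lra.
    + destruct (Rle_dec x p).
      * rewrite (Rmin_right p x), (Rmin_right p y), (Rmin_right q x), (Rmin_right q y) by lra. lra.
      * destruct (Rle_dec y p).
        -- rewrite (Rmin_right p y), (Rmin_right q y), (Rmin_left p x) by lra.
           rewrite (Rmax_right u' p) by lra. rewrite (Rmax_right u' y) by lra.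
           assert (F p <= F (Rmax u' (Rmin q x))); [|lra].
           apply Fmono. split. lra. unfold Rmax, Rmin. repeat destruct (Rle_dec _ _); lra.
        -- rewrite (Rmin_left p y), (Rmin_left p x) by lra.
           assert (F (Rmax u' (Rmin q y)) <= F (Rmax u' (Rmin q x))); [|lra].
           apply Fmono. split. eapply Rle_trans; [exact Hu|apply Rmax_l].
           unfold Rmax, Rmin. repeat destruct (Rle_dec _ _); lra.
Qed.

Lemma cover_lemma (A : R -> Prop) u v : LS_null F A -> 0 <= u < v -> (forall s, u < s <= v -> A s) -> F v <= F u.
Proof.
  intros [_ HL] Huv HA.
  apply Rnot_lt_le. intro Hlt. set (eps := (F v - F u) / 4).
  assert (He : 0 < eps) by (unfold eps; lra).
  destruct (HL eps He) as [al [bl [Hab [Hcov Hsum]]]].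
  assert (Hb' : forall n, exists b', bl n < b' /\ F b' - F (bl n) <= eps / 2 ^ (S n)).
  { intros n. destruct HF as [HD _]. destruct (HD (bl n) ltac:(specialize (Hab n); lra)) as [Hr _].
    destruct (Hr (eps / 2 ^ (S n))) as [d [Hd Hd2]]. apply Rdiv_lt_0_compat. lra. apply pow2_pos.
    exists (bl n + d / 2). split. lra. specialize (Hd2 (bl n + d/2) ltac:(lra)). apply Rabs_def2 in Hd2. lra. }
  destruct (fchoice _ Hb') as [b' Hb'2].
  destruct HF as [HD _]. destruct (HD u ltac:(lra)) as [Hru _].
  destruct (Hru eps He) as [du [Hdu Hdu2]].
  set (u' := u + Rmin du (v - u) / 2).
  assert (0 < Rmin du (v - u)) by (apply Rmin_glb_lt; lra).
  assert (Rmin du (v - u) <= du) by apply Rmin_l. assert (Rmin du (v - u) <= v - u) by apply Rmin_r.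
  assert (Hu'1 : u < u' < v) by (unfold u'; lra).
  assert (Hu'2 : F u' - F u < eps). { specialize (Hdu2 u' ltac:(unfold u'; lra)). apply Rabs_def2 in Hdu2. lra. }
  set (c := fun n x => F (cl u' (b' n) x) - F (cl u' (al n) x)).
  assert (Hcmono : forall n y x, u' <= y <= x -> c n y <= c n x).
  { intros n y x Hyx. unfold c. apply cl_clip_mono. lra. specialize (Hab n). specialize (Hb'2 n). lra. exact Hyx. }
  assert (Hc0 : forall n x, u' <= x -> 0 <= c n x).
  { intros n x Hx. pose proof (Hcmono n u' x ltac:(lra)) as Q. unfold c in *.
    rewrite !cl_self in Q. lra. }
  set (P := fun x => exists N, F x - F u' <= fsum (fun n => c n x) N).
  assert (Hstep : forall y x k, u' <= y <= x -> al k < y -> x < b' k -> P y -> P x).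
  { intros y x k Hyx Hay Hxb [N HN]. exists (max N (S k)).
    assert (Hk : c k x - c k y = F x - F y).
    { unfold c, cl. specialize (Hb'2 k). specialize (Hab k).
      rewrite (Rmin_right (b' k) x), (Rmin_right (b' k) y), (Rmin_left (al k) x), (Rmin_left (al k) y) by lra.
      rewrite (Rmax_right u' x), (Rmax_right u' y) by lra. ring. }
    assert (fsum (fun n => c n x) (max N (S k)) - fsum (fun n => c n y) (max N (S k)) >= c k x - c k y).
    { rewrite fsum_minus. apply Rle_ge.
      apply (fsum_one (fun n => c n x - c n y)). intros n. pose proof (Hcmono n y x Hyx). lra. lia. }
    pose proof (fsum_N (fun n => c n y) N (max N (S k)) ltac:(intros; apply Hc0; lra) ltac:(lia)).
    lra. }
  assert (HPall : forall x, u' <= x <= v -> P x).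
  { apply real_ind. lra.
    - exists O. simpl. lra.
    - intros x Hx Hall. destruct (Hcov x ltac:(lra) (HA x ltac:(lra))) as [k [Hk1 Hk2]].
      specialize (Hb'2 k). exists (b' k - x). split. lra.
      intros y Hy. apply (Hstep x y k). lra. lra. lra. apply Hall. lra.
    - intros x Hx Hall. destruct (Hcov x ltac:(lra) (HA x ltac:(lra))) as [k [Hk1 Hk2]].
      specialize (Hb'2 k) as Hbk.
      set (y := Rmax u' ((al k + x) / 2)).
      assert (u' <= y) by apply Rmax_l. assert ((al k + x)/2 <= y) by apply Rmax_r.
      assert (y < x). { unfold y, Rmax. destruct (Rle_dec u' ((al k + x)/2)); lra. }
      apply (Hstep y x k). lra. lra. lra. apply Hall. lra. }
  destruct (HPall v ltac:(lra)) as [N HN].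
  assert (fsum (fun n => c n v) N <= fsum (fun n => F (b' n) - F (al n)) N).
  { apply fsum_mono. intros n. unfold c, cl. specialize (Hb'2 n). specialize (Hab n).
    destruct (Rle_dec (b' n) u').
    - rewrite (Rmax_left u' (Rmin (b' n) v)) by (apply Rle_trans with (b' n); [apply Rmin_l|lra]).
      rewrite (Rmax_left u' (Rmin (al n) v)) by (apply Rle_trans with (al n); [apply Rmin_l|lra]).
      pose proof (Fmono (al n) (b' n) ltac:(lra)). lra.
    - destruct (Rle_dec (al n) v).
      + assert (F (Rmax u' (Rmin (b' n) v)) <= F (b' n)).
        { apply Fmono. split. eapply Rle_trans; [|apply Rmax_l]. lra.
          unfold Rmax, Rmin. repeat destruct (Rle_dec _ _); lra. }
        assert (F (al n) <= F (Rmax u' (Rmin (al n) v))).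
        { apply Fmono. split. lra. rewrite Rmin_left by lra. apply Rmax_r. }
        lra.
      + rewrite (Rmin_right (b' n) v), (Rmin_right (al n) v) by lra.
        pose proof (Fmono (al n) (b' n) ltac:(lra)). lra. }
  assert (Hgeo : forall N, fsum (fun n => F (b' n) - F (al n)) N <= cover_sum F al bl N + eps - eps / 2 ^ N).
  { induction N0; simpl. lra.
    specialize (Hb'2 N0). destruct Hb'2 as [_ Hb2].
    assert (eps / (2 * 2 ^ N0) = (eps / 2 ^ N0) / 2) by (field; apply Rgt_not_eq; apply pow2_pos).
    simpl in Hb2. rewrite H3 in Hb2. lra. }
  specialize (Hgeo N). specialize (Hsum N).
  assert (0 < eps / 2 ^ N) by (apply Rdiv_lt_0_compat; [lra|apply pow2_pos]).
  unfold eps in *. lra.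
Qed.

End Cover.

Lemma cover_sum_nonneg F al bl N : is_I F -> (forall n, 0 <= al n <= bl n) -> 0 <= cover_sum F al bl N.
Proof.
  intros HF Hab. induction N; simpl. lra.
  pose proof (proj2 HF (al N) (bl N) (Hab N)). lra.
Qed.

Lemma atom_point F A s : is_I F -> LS_null F A -> 0 < s -> A s ->
  forall eps, 0 < eps -> exists y, 0 <= y < s /\ F s - F y <= eps.
Proof.
  intros HF [_ HL] Hs HA eps He. destruct (HL eps He) as [al [bl [Hab [Hcov Hsum]]]].
  destruct (Hcov s Hs HA) as [n [Hn1 Hn2]]. exists (al n). pose proof (Hab n) as Hn. split. lra.
  pose proof (Hsum (S n)) as H1. simpl in H1.
  pose proof (cover_sum_nonneg F al bl n HF Hab).
  pose proof (proj2 HF s (bl n) ltac:(lra)). lra.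
Qed.

Lemma uniq_le (a : R) (psi phi1 eta1 phi2 eta2 : R -> R) :
  0 < a -> Skorokhod_sol a psi phi1 eta1 -> Skorokhod_sol a psi phi2 eta2 ->
  forall t, 0 <= t -> phi1 t <= phi2 t.
Proof.
  intros Ha [_ [_ [Hr1 [l1 [u1 [Hl1 [Hu1 [Hl10 [Hu10 [Hd1 [LSl1 LSu1]]]]]]]]]]]
            [_ [_ [Hr2 [l2 [u2 [Hl2 [Hu2 [Hl20 [Hu20 [Hd2 [LSl2 LSu2]]]]]]]]]]].
  intros t Ht. apply Rnot_lt_le. intro Hlt.
  set (D := fun z => phi1 z - phi2 z).
  assert (HD : forall z, 0 <= z -> D z = (l1 z - u1 z) - (l2 z - u2 z)).
  { intros z Hz. unfold D. destruct (Hr1 z Hz) as [E1 _]. destruct (Hr2 z Hz) as [E2 _].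
    rewrite E1, E2, Hd1, Hd2 by exact Hz. ring. }
  assert (HA1 : forall z, 0 <= z -> 0 < D z -> 0 <= z /\ phi1 z > 0).
  { intros z Hz HDz. unfold D in HDz. destruct (Hr2 z Hz) as [_ [H1 _]]. split; lra. }
  assert (HA2 : forall z, 0 <= z -> 0 < D z -> 0 <= z /\ phi2 z < a).
  { intros z Hz HDz. unfold D in HDz. destruct (Hr1 z Hz) as [_ [_ H1]]. split; lra. }
  pose proof (proj2 Hl1) as Ml1. pose proof (proj2 Hl2) as Ml2.
  pose proof (proj2 Hu1) as Mu1. pose proof (proj2 Hu2) as Mu2.
  assert (Hflat : forall p q, 0 <= p <= q -> (forall z, p < z <= q -> 0 < D z) ->
     l1 q <= l1 p /\ u2 q <= u2 p).
  { intros p q Hpq Hpos. destruct (Req_dec p q) as [->|E]. lra.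
    split.
    - apply (cover_lemma l1 Hl1 _ p q LSl1). lra. intros z Hz. apply HA1. lra. apply Hpos. lra.
    - apply (cover_lemma u2 Hu2 _ p q LSu2). lra. intros z Hz. apply HA2. lra. apply Hpos. lra. }
  assert (HDt : 0 < D t) by (unfold D; lra).
  destruct (classic (exists z, 0 <= z <= t /\ D z <= 0)) as [[z0 Hz0]|Hnone].
  - set (Z := fun z => 0 <= z <= t /\ D z <= 0).
    assert (HZ : is_lub Z (Rsup Z)).
    { apply Rsup_lub. exists z0. exact Hz0. exists t. intros z [Hz _]. lra. }
    set (s := Rsup Z) in *.
    assert (Hs0 : z0 <= s) by (apply (proj1 HZ); exact Hz0).
    assert (Hst : s <= t) by (apply (proj2 HZ); intros z [Hz _]; lra).
    assert (Hafter : forall z, s < z <= t -> 0 < D z).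
    { intros z Hz. apply Rnot_le_lt. intro HDz. assert (z <= s) by (apply (proj1 HZ); split; [lra|exact HDz]). lra. }
    destruct (Rle_dec (D s) 0) as [HDs|HDs].
    + destruct (Hflat s t ltac:(lra) Hafter) as [F1 F2].
      pose proof (Mu1 s t ltac:(lra)). pose proof (Ml2 s t ltac:(lra)).
      rewrite (HD t Ht) in HDt. rewrite (HD s ltac:(lra)) in HDs. lra.
    + assert (Hspos : 0 < s).
      { destruct (Req_dec s 0) as [E|E]; [|lra]. exfalso. assert (z0 = 0) by lra. subst z0.
        apply HDs. rewrite E. exact (proj2 Hz0). }
      assert (HDs' : 0 < D s) by lra.
      set (eps := D t / 4).
      destruct (atom_point l1 _ s Hl1 LSl1 Hspos (HA1 s ltac:(lra) HDs') eps ltac:(unfold eps; lra)) as [y1 [Hy1 Hy1']].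
      destruct (atom_point u2 _ s Hu2 LSu2 Hspos (HA2 s ltac:(lra) HDs') eps ltac:(unfold eps; lra)) as [y2 [Hy2 Hy2']].
      set (y := Rmax y1 y2).
      assert (y1 <= y) by apply Rmax_l. assert (y2 <= y) by apply Rmax_r.
      assert (y < s). { unfold y, Rmax. destruct (Rle_dec y1 y2); lra. }
      destruct (classic (exists z, Z z /\ y < z)) as [[z [[Hz1 Hz2] Hz3]]|Hno].
      * assert (Hzs : z <= s) by (apply (proj1 HZ); split; assumption).
        assert (l1 t <= l1 s /\ u2 t <= u2 s) as [F1 F2].
        { destruct (Req_dec s t) as [->|E]. lra. apply Hflat. lra. exact Hafter. }
        pose proof (Ml1 y1 z ltac:(lra)). pose proof (Mu2 y2 z ltac:(lra)).
        pose proof (Mu1 z t ltac:(lra)). pose proof (Ml2 z t ltac:(lra)).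
        rewrite (HD t Ht) in HDt. rewrite (HD z ltac:(lra)) in Hz2. unfold eps in *.
        rewrite (HD t Ht) in Hy1', Hy2'. lra.
      * assert (s <= y); [|lra]. apply (proj2 HZ). intros z Hz. apply Rnot_lt_le. intro Hc. apply Hno. exists z. split; assumption.
  - assert (Hpos : forall z, 0 <= z <= t -> 0 < D z).
    { intros z Hz. apply Rnot_le_lt. intro Hc. apply Hnone. exists z. split; assumption. }
    assert (HD0 : 0 < D 0) by (apply Hpos; lra).
    destruct LSl1 as [At1 _]. destruct LSu2 as [At2 _].
    specialize (At1 (HA1 0 ltac:(lra) HD0)). specialize (At2 (HA2 0 ltac:(lra) HD0)).
    destruct (Hflat 0 t ltac:(lra)) as [F1 F2]. intros z Hz. apply Hpos. lra.
    pose proof (Mu1 0 t ltac:(lra)). pose proof (Ml2 0 t ltac:(lra)).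
    pose proof (Ml1 0 t ltac:(lra)). pose proof (Mu2 0 t ltac:(lra)).
    rewrite (HD t Ht) in HDt. lra.
Qed.

Theorem theorem1p4 (a : R) (psi : R -> R) :
  0 < a -> is_D psi ->
  let phi := Lambda a (Gamma0 psi) in
  Skorokhod_sol a psi phi (fun t => phi t - psi t) /\
  (forall phi' eta' : R -> R, Skorokhod_sol a psi phi' eta' ->
     forall t, 0 <= t -> phi' t = phi t).
Proof.
  intros Ha Hpsi phi. pose proof (existence a Ha psi Hpsi) as Hex.
  split. exact Hex.
  intros phi' eta' Hs t Ht. apply Rle_antisym.
  - exact (uniq_le a psi phi' eta' phi _ Ha Hs Hex t Ht).
  - exact (uniq_le a psi phi _ phi' eta' Ha Hex Hs t Ht).
Qed.
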